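(* In the setting described in the context, when $d\zeta_0''$ is expanded in the basis of 2-forms built from the coframe $\{\rho_0,\kappa_0',\zeta_0'',\bar\kappa_0',\bar\zeta_0''\}$, its coefficient of $\rho_0\wedge\bar\zeta_0''$ vanishes identically on $M$. (Explicitly, this coefficient equals $-i\,\frac{\overline{\mathcal L}_1(\bar k)}{\mathcal L_1(\bar k)}H_0-i\,\frac{\overline{\mathcal K}(H_0)}{\mathcal L_1(\bar k)}-i\,H_0\,\frac{\overline{\mathcal L}_1(\bar k)}{\mathcal L_1(\bar k)}$, and this is $\equiv0$.)
   Context: Let $M\subset\mathbb C^3$ be a real-analytic real hypersurface, considered locally near a point, represented in holomorphic coordinates $(z_1,z_2,w)$, $w=u+iv$, as a graph $u=F(z_1,z_2,\bar z_1,\bar z_2,v)$; $(z_1,z_2,\bar z_1,\bar z_2,v)$ are coordinates on $M$. Bars denote complex conjugation. Put $A^j:=-iF_{z_j}/(1+iF_v)$, $\mathcal L_j:=\partial_{z_j}+A^j\partial_v$ ($j=1,2$). Let $\ell:=i(\mathcal L_1(\overline{A^1})-\overline{\mathcal L}_1(A^1))$, assumed nowhere zero. Assume the Levi form has constant rank 1, let $k:=-(\mathcal L_2(\overline{A^1})-\overline{\mathcal L}_1(A^2))/(\mathcal L_1(\overline{A^1})-\overline{\mathcal L}_1(A^1))$, $\mathcal K:=k\mathcal L_1+\mathcal L_2$, $\overline{\mathcal K}=\bar k\overline{\mathcal L}_1+\overline{\mathcal L}_2$, and assume $\overline{\mathcal L}_1(k)$ vanishes nowhere (2-nondegeneracy).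 Let $P:=(\ell_{z_1}+A^1\ell_v-\ell A^1_v)/\ell$, $B_0:=\overline{\mathcal L}_1(\overline{\mathcal L}_1(k))/\overline{\mathcal L}_1(k)-\overline P$, and $H_0:=-\tfrac16\tfrac{\overline{\mathcal L}_1(\overline{\mathcal L}_1(\overline{\mathcal L}_1(k)))}{\overline{\mathcal L}_1(k)}+\tfrac29\tfrac{\overline{\mathcal L}_1(\overline{\mathcal L}_1(k))^2}{\overline{\mathcal L}_1(k)^2}+\tfrac1{18}\tfrac{\overline{\mathcal L}_1(\overline{\mathcal L}_1(k))\overline P}{\overline{\mathcal L}_1(k)}+\tfrac16\overline{\mathcal L}_1(\overline P)-\tfrac19\overline P^{\,2}$. Define the 1-forms on $M$: $\rho_0:=\ell^{-1}(dv-A^1dz_1-A^2dz_2-\overline{A^1}d\bar z_1-\overline{A^2}d\bar z_2)$, $\kappa_0':=dz_1-k\,dz_2+\tfrac i3B_0\rho_0$, $\zeta_0'':=\overline{\mathcal L}_1(k)\,dz_2+iH_0\,\rho_0$, and their conjugates; $\{\rho_0,\kappa_0',\zeta_0'',\bar\kappa_0',\bar\zeta_0''\}$ is a coframe of $\mathbb C\otimes TM$. *)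

(* Defs.v *)
From Stdlib Require Import Reals List.
From Coquelicot Require Import Coquelicot.
Open Scope R_scope.

(* Points of M, in the real coordinates (x1,y1,x2,y2,v), z_j = x_j + i y_j. *)
Record pt := mkpt { px1 : R; py1 : R; px2 : R; py2 : R; pv : R }.

Definition getc (p : pt) (i : nat) : R :=
  match i with
  | 0%nat => px1 p | 1%nat => py1 p | 2%nat => px2 p | 3%nat => py2 p | _ => pv p
  end.

Definition setc (p : pt) (i : nat) (t : R) : pt :=
  match i with
  | 0%nat => mkpt t (py1 p) (px2 p) (py2 p) (pv p)
  | 1%nat => mkpt (px1 p) t (px2 p) (py2 p) (pv p)
  | 2%nat => mkpt (px1 p) (py1 p) t (py2 p) (pv p)
  | 3%nat => mkpt (px1 p) (py1 p) (px2 p) t (pv p)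
  | _ => mkpt (px1 p) (py1 p) (px2 p) (py2 p) t
  end.

Definition rpartial (i : nat) (f : pt -> R) (p : pt) : R :=
  Derive (fun t => f (setc p i t)) (getc p i).

Definition near_pt (p q : pt) (d : R) : Prop :=
  forall i, (i < 5)%nat -> Rabs (getc q i - getc p i) < d.

Definition open_pt (U : pt -> Prop) : Prop :=
  forall p, U p -> exists d, 0 < d /\ forall q, near_pt p q d -> U q.

Definition cont_at (f : pt -> R) (p : pt) : Prop :=
  forall eps, 0 < eps -> exists d, 0 < d /\
    forall q, near_pt p q d -> Rabs (f q - f p) < eps.

Fixpoint iter_partial (l : list nat) (f : pt -> R) : pt -> R :=
  match l with
  | nil => f
  | i :: l' => rpartial i (iter_partial l' f)
  end.

Definition smooth_on (U : pt -> Prop) (f : pt -> R) : Prop :=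
  forall (l : list nat) p, U p ->
    cont_at (iter_partial l f) p /\
    forall i, (i < 5)%nat ->
      ex_derive (fun t => iter_partial l f (setc p i t)) (getc p i).

Definition sq_partial (t : nat -> nat -> nat -> nat -> nat -> R) (N : nat) : R :=
  sum_f_R0 (fun n1 => sum_f_R0 (fun n2 => sum_f_R0 (fun n3 =>
    sum_f_R0 (fun n4 => sum_f_R0 (fun n5 => t n1 n2 n3 n4 n5) N) N) N) N) N.

Definition analytic_on (U : pt -> Prop) (f : pt -> R) : Prop :=
  forall p, U p -> exists (a : nat -> nat -> nat -> nat -> nat -> R) (r : R),
    0 < r /\ forall q, near_pt p q r ->
      let term := fun n1 n2 n3 n4 n5 =>
        a n1 n2 n3 n4 n5 * (px1 q - px1 p) ^ n1 * (py1 q - py1 p) ^ n2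
          * (px2 q - px2 p) ^ n3 * (py2 q - py2 p) ^ n4 * (pv q - pv p) ^ n5 in
      (exists B, forall N, sq_partial (fun n1 n2 n3 n4 n5 => Rabs (term n1 n2 n3 n4 n5)) N <= B)
      /\ is_lim_seq (sq_partial term) (f q).

Open Scope C_scope.

Definition cfun := pt -> C.

Definition cpartial (i : nat) (f : cfun) (p : pt) : C :=
  (rpartial i (fun q => fst (f q)) p, rpartial i (fun q => snd (f q)) p).

Definition Dz (j : nat) (f : cfun) : cfun := fun p =>
  match j with
  | 1%nat => (cpartial 0 f p - Ci * cpartial 1 f p) / 2
  | _ => (cpartial 2 f p - Ci * cpartial 3 f p) / 2
  end.
Definition Dzb (j : nat) (f : cfun) : cfun := fun p =>
  match j with
  | 1%nat => (cpartial 0 f p + Ci * cpartial 1 f p) / 2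
  | _ => (cpartial 2 f p + Ci * cpartial 3 f p) / 2
  end.
Definition Dv (f : cfun) : cfun := fun p => cpartial 4 f p.

Definition cconj (f : cfun) : cfun := fun p => Cconj (f p).

Section Setting.
Variable F : pt -> R.   (* M : u = F(z1,z2,zbar1,zbar2,v) *)

Definition Fc : cfun := fun p => RtoC (F p).

Definition Acoef (j : nat) : cfun := fun p =>
  - Ci * Dz j Fc p / (1 + Ci * Dv Fc p).
Definition Abcoef (j : nat) : cfun := cconj (Acoef j).

Definition Lop (j : nat) (g : cfun) : cfun := fun p => Dz j g p + Acoef j p * Dv g p.
Definition Lbop (j : nat) (g : cfun) : cfun := fun p => Dzb j g p + Abcoef j p * Dv g p.

Definition ell : cfun := fun p => Ci * (Lop 1 (Abcoef 1) p - Lbop 1 (Acoef 1) p).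

(* Levi matrix: [L_i, Lbar_j] = (L_i(Abar^j) - Lbar_j(A^i)) d_v *)
Definition levi (i j : nat) : cfun := fun p => Lop i (Abcoef j) p - Lbop j (Acoef i) p.

Definition levi_rank_one (p : pt) : Prop :=
  levi 1 1 p * levi 2 2 p - levi 1 2 p * levi 2 1 p = 0 /\
  (levi 1 1 p <> 0 \/ levi 1 2 p <> 0 \/ levi 2 1 p <> 0 \/ levi 2 2 p <> 0).

Definition kk : cfun := fun p =>
  - (Lop 2 (Abcoef 1) p - Lbop 1 (Acoef 2) p) / (Lop 1 (Abcoef 1) p - Lbop 1 (Acoef 1) p).
Definition kkb : cfun := cconj kk.

Definition Kop (g : cfun) : cfun := fun p => kk p * Lop 1 g p + Lop 2 g p.
Definition Kbop (g : cfun) : cfun := fun p => kkb p * Lbop 1 g p + Lbop 2 g p.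

Definition Lb1k : cfun := Lbop 1 kk.

Definition Pf : cfun := fun p =>
  (Dz 1 ell p + Acoef 1 p * Dv ell p - ell p * Dv (Acoef 1) p) / ell p.
Definition Pbf : cfun := cconj Pf.

Definition B0 : cfun := fun p => Lbop 1 Lb1k p / Lb1k p - Pbf p.

Definition H0 : cfun := fun p =>
  - (1/6) * (Lbop 1 (Lbop 1 Lb1k) p / Lb1k p)
  + (2/9) * (Lbop 1 Lb1k p ^ 2 / Lb1k p ^ 2)
  + (1/18) * (Lbop 1 Lb1k p * Pbf p / Lb1k p)
  + (1/6) * Lbop 1 Pbf p
  - (1/9) * Pbf p ^ 2.

(* 1-forms on C (x) TM: coefficient functions in the basis
   (dz1, dz2, dzbar1, dzbar2, dv), indices 0..4 *)
Definition form1 := nat -> cfun.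

Definition Dcoord (i : nat) (g : cfun) : cfun :=
  match i with
  | 0%nat => Dz 1 g | 1%nat => Dz 2 g | 2%nat => Dzb 1 g | 3%nat => Dzb 2 g | _ => Dv g
  end.

(* complex conjugate of a 1-form: conj(dz_j) = dzbar_j, conj(dv) = dv *)
Definition conj_form (w : form1) : form1 := fun i =>
  match i with
  | 0%nat => cconj (w 2%nat) | 1%nat => cconj (w 3%nat)
  | 2%nat => cconj (w 0%nat) | 3%nat => cconj (w 1%nat) | _ => cconj (w 4%nat)
  end.

Definition rho0 : form1 := fun i p =>
  match i with
  | 0%nat => - Acoef 1 p / ell p | 1%nat => - Acoef 2 p / ell p
  | 2%nat => - Abcoef 1 p / ell p | 3%nat => - Abcoef 2 p / ell p
  | _ => 1 / ell p
  end.

Definition kappa0' : form1 := fun i p =>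
  match i with
  | 0%nat => 1 | 1%nat => - kk p | _ => 0
  end + (Ci / 3) * B0 p * rho0 i p.

Definition zeta0'' : form1 := fun i p =>
  match i with
  | 1%nat => Lb1k p | _ => 0
  end + Ci * H0 p * rho0 i p.

Definition coframe (a : nat) : form1 :=
  match a with
  | 0%nat => rho0 | 1%nat => kappa0' | 2%nat => zeta0''
  | 3%nat => conj_form kappa0' | _ => conj_form zeta0''
  end.

End Setting.

(* 2-forms are represented by their values on pairs of coordinate vectors
   (d/dz1, d/dz2, d/dzbar1, d/dzbar2, d/dv). *)
Definition form2 := nat -> nat -> cfun.

Definition dform (w : form1) : form2 := fun i j p =>
  Dcoord i (w j) p - Dcoord j (w i) p.

Definition wedge (a b : form1) : form2 := fun i j p =>
  a i p * b j p - a j p * b i p.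

Definition pairs5 : list (nat * nat) :=
  ((0,1) :: (0,2) :: (0,3) :: (0,4) :: (1,2) :: (1,3) :: (1,4) :: (2,3) :: (2,4) :: (3,4) :: nil)%nat.

Definition expand2 (th : nat -> form1) (c : nat -> nat -> cfun) : form2 := fun i j p =>
  fold_right (fun ab acc => c (fst ab) (snd ab) p * wedge (th (fst ab)) (th (snd ab)) i j p + acc)
    0 pairs5.

(* Main.v *)
Require Import Defs.
From Stdlib Require Import Reals List.
From Coquelicot Require Import Coquelicot.
From Stdlib Require Import Lia Lra FunctionalExtensionality.
Open Scope R_scope.

Lemma setc_getc p i : setc p i (getc p i) = p.
Proof.
  destruct p as [a b c d e]. destruct i as [|[|[|[|i]]]]; reflexivity.
Qed.

Lemma getc_setc_eq p i t : (i < 5)%nat -> getc (setc p i t) i = t.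
Proof. intros H. destruct i as [|[|[|[|[|i]]]]]; try reflexivity; lia. Qed.

Lemma getc_setc_neq p i j t : (i < 5)%nat -> (j < 5)%nat -> i <> j ->
  getc (setc p i t) j = getc p j.
Proof.
  intros Hi Hj Hij.
  destruct i as [|[|[|[|[|i]]]]]; destruct j as [|[|[|[|[|j]]]]]; try reflexivity; lia.
Qed.

Lemma setc_setc_eq p i s t : setc (setc p i s) i t = setc p i t.
Proof. destruct i as [|[|[|[|i]]]]; reflexivity. Qed.

Lemma setc_setc_neq p i j s t : (i < 5)%nat -> (j < 5)%nat -> i <> j ->
  setc (setc p i s) j t = setc (setc p j t) i s.
Proof.
  intros Hi Hj Hij.
  destruct i as [|[|[|[|[|i]]]]]; destruct j as [|[|[|[|[|j]]]]]; try reflexivity; lia.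
Qed.

Lemma near_setc p i t d : (i < 5)%nat -> 0 < d -> Rabs (t - getc p i) < d ->
  near_pt p (setc p i t) d.
Proof.
  intros Hi Hd Ht j Hj.
  destruct (Nat.eq_dec i j) as [->|Hne].
  - rewrite getc_setc_eq; auto.
  - rewrite getc_setc_neq; auto. unfold Rminus. rewrite Rplus_opp_r, Rabs_R0. auto.
Qed.

Lemma near_setc2 p i j u v d : (i < 5)%nat -> (j < 5)%nat -> i <> j -> 0 < d ->
  Rabs (u - getc p i) < d -> Rabs (v - getc p j) < d ->
  near_pt p (setc (setc p i u) j v) d.
Proof.
  intros Hi Hj Hij Hd Hu Hv k Hk.
  destruct (Nat.eq_dec j k) as [->|Hne].
  - rewrite getc_setc_eq; auto.
  - rewrite getc_setc_neq; auto.
    destruct (Nat.eq_dec i k) as [->|Hne2].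
    + rewrite getc_setc_eq; auto.
    + rewrite getc_setc_neq; auto. unfold Rminus. rewrite Rplus_opp_r, Rabs_R0. auto.
Qed.

Lemma near_trans p q r d1 d2 : near_pt p q d1 -> near_pt q r d2 -> near_pt p r (d1 + d2).
Proof.
  intros H1 H2 i Hi. specialize (H1 i Hi). specialize (H2 i Hi).
  replace (getc r i - getc p i) with ((getc r i - getc q i) + (getc q i - getc p i)) by ring.
  eapply Rle_lt_trans. apply Rabs_triang. lra.
Qed.

Lemma near_refl p d : 0 < d -> near_pt p p d.
Proof. intros Hd i Hi. unfold Rminus. rewrite Rplus_opp_r, Rabs_R0. auto. Qed.

Lemma near_mono p q d1 d2 : d1 <= d2 -> near_pt p q d1 -> near_pt p q d2.
Proof. intros Hd H i Hi. specialize (H i Hi). lra. Qed.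

Section Smooth.
Context {U : pt -> Prop} (HU : open_pt U).

Lemma loc_U p i : U p -> (i < 5)%nat -> locally (getc p i) (fun t => U (setc p i t)).
Proof.
  intros Hp Hi. destruct (HU p Hp) as [d [Hd Hq]].
  exists (mkposreal d Hd). intros t Ht. apply Hq. apply near_setc; auto.
Qed.

Lemma cont_ext (f g : pt -> R) p : U p -> (forall q, U q -> f q = g q) -> cont_at f p -> cont_at g p.
Proof.
  intros Hp Hfg Hc eps Heps. destruct (Hc eps Heps) as [d1 [Hd1 H1]].
  destruct (HU p Hp) as [d0 [Hd0 H0]].
  exists (Rmin d0 d1). split. apply Rmin_pos; auto.
  intros q Hq. rewrite <- !Hfg; auto.
  - apply H1. eapply near_mono; [|exact Hq]. apply Rmin_r.
  - apply H0. eapply near_mono; [|exact Hq]. apply Rmin_l.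
Qed.

Lemma cont_comp2 (h : R -> R -> R) f g p : cont_at f p -> cont_at g p ->
  continuity_2d_pt h (f p) (g p) -> cont_at (fun q => h (f q) (g q)) p.
Proof.
  intros Hf Hg Hh eps Heps.
  destruct (Hh (mkposreal eps Heps)) as [d Hd].
  destruct (Hf d (cond_pos d)) as [d1 [Hd1 H1]].
  destruct (Hg d (cond_pos d)) as [d2 [Hd2 H2]].
  exists (Rmin d1 d2). split. apply Rmin_pos; auto.
  intros q Hq. apply (Hd (f q) (g q)).
  - apply H1. eapply near_mono; [|exact Hq]. apply Rmin_l.
  - apply H2. eapply near_mono; [|exact Hq]. apply Rmin_r.
Qed.

Lemma cont_const c p : cont_at (fun _ => c) p.
Proof. intros eps Heps. exists 1. split. lra. intros. unfold Rminus. rewrite Rplus_opp_r, Rabs_R0. auto. Qed.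

Lemma cont_plus f g p : cont_at f p -> cont_at g p -> cont_at (fun q => f q + g q) p.
Proof.
  intros. apply (cont_comp2 (fun u v => u + v)); auto.
  apply continuity_2d_pt_plus. apply continuity_2d_pt_id1. apply continuity_2d_pt_id2.
Qed.

Lemma cont_mult f g p : cont_at f p -> cont_at g p -> cont_at (fun q => f q * g q) p.
Proof.
  intros. apply (cont_comp2 (fun u v => u * v)); auto.
  apply continuity_2d_pt_mult. apply continuity_2d_pt_id1. apply continuity_2d_pt_id2.
Qed.

Lemma cont_inv f p : cont_at f p -> f p <> 0 -> cont_at (fun q => / f q) p.
Proof.
  intros Hf Hn. apply (cont_comp2 (fun u v => / u) f f); auto.
  apply continuity_2d_pt_inv. apply continuity_2d_pt_id1. auto.
Qed.

Fixpoint Ck (n : nat) (f : pt -> R) : Prop :=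
  (forall p, U p -> cont_at f p) /\
  match n with
  | O => True
  | S n' => (forall i p, (i < 5)%nat -> U p -> ex_derive (fun t => f (setc p i t)) (getc p i))
            /\ (forall i, (i < 5)%nat -> Ck n' (rpartial i f))
  end.

Lemma Ck_S n f : Ck (S n) f -> Ck n f.
Proof.
  revert f. induction n as [|n IH]; intros f [Hc [Hd Hp]].
  - split; auto.
  - split; [auto|]. split; [auto|]. intros i Hi. apply IH. apply Hp. auto.
Qed.

Lemma Ck_le m n f : (m <= n)%nat -> Ck n f -> Ck m f.
Proof. intros Hle; induction Hle; intros Hc; auto. apply IHHle. apply Ck_S. auto. Qed.

Lemma rpartial_ext_U i f g p : (i < 5)%nat -> U p -> (forall q, U q -> f q = g q) ->
  rpartial i f p = rpartial i g p.
Proof.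
  intros Hi Hp Hfg. unfold rpartial. apply Derive_ext_loc.
  destruct (loc_U p i Hp Hi) as [e He]. exists e. intros t Ht. apply Hfg. apply He. auto.
Qed.

Lemma ex_derive_ext_U i (f g : pt -> R) p : (i < 5)%nat -> U p -> (forall q, U q -> f q = g q) ->
  ex_derive (fun t => f (setc p i t)) (getc p i) -> ex_derive (fun t => g (setc p i t)) (getc p i).
Proof.
  intros Hi Hp Hfg. apply ex_derive_ext_loc.
  destruct (loc_U p i Hp Hi) as [e He]. exists e. intros t Ht. apply Hfg. apply He. auto.
Qed.

Lemma Ck_ext n f g : (forall q, U q -> f q = g q) -> Ck n f -> Ck n g.
Proof.
  revert f g. induction n as [|n IH]; intros f g Hfg [Hc Hr].
  - split; auto. intros p Hp. eapply cont_ext; eauto.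
  - destruct Hr as [Hd Hp]. split; [|split].
    + intros p Hp'. eapply cont_ext; eauto.
    + intros i p Hi Hp'. eapply ex_derive_ext_U; eauto.
    + intros i Hi. apply (IH (rpartial i f)); auto.
      intros q Hq. apply rpartial_ext_U; auto.
Qed.

Lemma Ck_const n : forall c, Ck n (fun _ => c).
Proof.
  induction n as [|n IH]; intros c.
  - split; auto. intros; apply cont_const.
  - split; [|split].
    + intros; apply cont_const.
    + intros. apply ex_derive_const.
    + intros i Hi. eapply Ck_ext; [|exact (IH 0)]. intros q Hq. unfold rpartial.
      rewrite Derive_const. reflexivity.
Qed.

Lemma Ck_plus n f g : Ck n f -> Ck n g -> Ck n (fun q => f q + g q).
Proof.
  revert f g. induction n as [|n IH]; intros f g [Hcf Hf] [Hcg Hg].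
  - split; auto. intros; apply cont_plus; auto.
  - destruct Hf as [Hdf Hpf]. destruct Hg as [Hdg Hpg]. split; [|split].
    + intros; apply cont_plus; auto.
    + intros i p Hi Hp. apply (ex_derive_plus (fun t => f (setc p i t)) (fun t => g (setc p i t))); auto.
    + intros i Hi. eapply Ck_ext; [|apply (IH (rpartial i f) (rpartial i g)); auto].
      intros q Hq. unfold rpartial. symmetry.
      apply (Derive_plus (fun t => f (setc q i t)) (fun t => g (setc q i t))); auto.
Qed.

Lemma Ck_mult n f g : Ck n f -> Ck n g -> Ck n (fun q => f q * g q).
Proof.
  revert f g. induction n as [|n IH]; intros f g Hf0 Hg0.
  - destruct Hf0 as [Hcf _]. destruct Hg0 as [Hcg _].
    split; auto. intros; apply cont_mult; auto.
  - generalize (Ck_S _ _ Hf0) (Ck_S _ _ Hg0). intros Hfn Hgn.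
    destruct Hf0 as [Hcf [Hdf Hpf]]. destruct Hg0 as [Hcg [Hdg Hpg]].
    split; [|split].
    + intros; apply cont_mult; auto.
    + intros i p Hi Hp. apply (ex_derive_mult (fun t => f (setc p i t)) (fun t => g (setc p i t))); auto.
    + intros i Hi.
      eapply Ck_ext; [|apply (Ck_plus _ (fun q => rpartial i f q * g q) (fun q => f q * rpartial i g q)); apply IH; auto].
      intros q Hq. unfold rpartial. symmetry.
      rewrite (Derive_mult (fun t => f (setc q i t)) (fun t => g (setc q i t))); auto.
      rewrite !setc_getc. reflexivity.
Qed.

Lemma Ck_inv n f : Ck n f -> (forall q, U q -> f q <> 0) -> Ck n (fun q => / f q).
Proof.
  revert f. induction n as [|n IH]; intros f Hf0 Hnz.
  - destruct Hf0 as [Hcf _]. split; auto. intros; apply cont_inv; auto.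
  - generalize (Ck_S _ _ Hf0). intros Hfn.
    destruct Hf0 as [Hcf [Hdf Hpf]].
    split; [|split].
    + intros; apply cont_inv; auto.
    + intros i p Hi Hp. apply (ex_derive_inv (fun t => f (setc p i t))); auto.
      rewrite setc_getc. auto.
    + intros i Hi. generalize (IH f Hfn Hnz). intros Hinv.
      eapply Ck_ext; [|apply (Ck_mult _ (fun q => - 1 * rpartial i f q) (fun q => / f q * / f q))].
      * intros q Hq. unfold rpartial.
        rewrite (Derive_inv (fun t => f (setc q i t))); auto.
        rewrite setc_getc. field. auto. rewrite setc_getc; auto.
      * apply Ck_mult; auto. apply Ck_const.
      * apply Ck_mult; auto.
Qed.

Definition Sm f := forall n, Ck n f.

Lemma Sm_ext f g : (forall q, U q -> f q = g q) -> Sm f -> Sm g.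
Proof. intros H Hf n. eapply Ck_ext; eauto. Qed.
Lemma Sm_const c : Sm (fun _ => c).
Proof. intros n; apply Ck_const. Qed.
Lemma Sm_plus f g : Sm f -> Sm g -> Sm (fun q => f q + g q).
Proof. intros Hf Hg n; apply Ck_plus; auto. Qed.
Lemma Sm_mult f g : Sm f -> Sm g -> Sm (fun q => f q * g q).
Proof. intros Hf Hg n; apply Ck_mult; auto. Qed.
Lemma Sm_inv f : Sm f -> (forall q, U q -> f q <> 0) -> Sm (fun q => / f q).
Proof. intros Hf Hg n; apply Ck_inv; auto. Qed.
Lemma Sm_opp f : Sm f -> Sm (fun q => - f q).
Proof.
  intros Hf. eapply Sm_ext; [|apply (Sm_mult (fun _ => -1) f); auto using Sm_const].
  intros; simpl; ring.
Qed.
Lemma Sm_minus f g : Sm f -> Sm g -> Sm (fun q => f q - g q).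
Proof. intros Hf Hg. apply (Sm_plus f (fun q => - g q)); auto. apply Sm_opp; auto. Qed.
Lemma Sm_partial i f : (i < 5)%nat -> Sm f -> Sm (rpartial i f).
Proof. intros Hi Hf n. destruct (Hf (S n)) as [_ [_ H]]. apply H. exact Hi. Qed.
Lemma Sm_exd i f p : (i < 5)%nat -> U p -> Sm f -> ex_derive (fun t => f (setc p i t)) (getc p i).
Proof. intros Hi Hp Hf. destruct (Hf 1%nat) as [_ [H _]]. auto. Qed.
Lemma Sm_cont f p : U p -> Sm f -> cont_at f p.
Proof. intros Hp Hf. destruct (Hf 0%nat) as [H _]. auto. Qed.

Lemma iter_partial_app l i f : iter_partial (l ++ i :: nil) f = iter_partial l (rpartial i f).
Proof. induction l as [|a l IH]; simpl; auto. rewrite IH. reflexivity. Qed.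

Lemma smooth_Sm f : smooth_on U f -> Sm f.
Proof.
  intros H n. revert f H. induction n as [|n IH]; intros f H.
  - split; auto. intros p Hp. apply (H nil p Hp).
  - split; [|split].
    + intros p Hp. apply (H nil p Hp).
    + intros i p Hi Hp. apply (H nil p Hp); auto.
    + intros i Hi. apply IH. intros l p Hp.
      rewrite <- iter_partial_app. apply H; auto.
Qed.

Lemma rpartial_comm i j f p : (i < 5)%nat -> (j < 5)%nat -> U p -> Sm f ->
  rpartial i (rpartial j f) p = rpartial j (rpartial i f) p.
Proof.
  intros Hi Hj Hp Hf.
  destruct (Nat.eq_dec i j) as [->|Hij]; [reflexivity|].
  assert (Hji : j <> i) by auto.
  set (g := fun u v => f (setc (setc p i u) j v)).
  destruct (HU p Hp) as [d [Hd HdU]].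
  assert (HUq : forall u v, Rabs (u - getc p i) < d -> Rabs (v - getc p j) < d ->
      U (setc (setc p i u) j v)).
  { intros u v Hu Hv. apply HdU. apply near_setc2; auto. }
  assert (E1 : forall u, rpartial j f (setc p i u) = Derive (fun t => g u t) (getc p j)).
  { intros u. unfold rpartial, g. rewrite getc_setc_neq; auto. }
  assert (E2 : forall v, rpartial i f (setc p j v) = Derive (fun t => g t v) (getc p i)).
  { intros v. unfold rpartial, g. rewrite getc_setc_neq; auto.
    apply Derive_ext. intros t. rewrite setc_setc_neq; auto. }
  change (Derive (fun t => rpartial j f (setc p i t)) (getc p i) = Derive (fun t => rpartial i f (setc p j t)) (getc p j)).
  rewrite (Derive_ext (fun t => rpartial j f (setc p i t)) (fun z => Derive (fun t => g z t) (getc p j))); auto.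
  rewrite (Derive_ext (fun t => rpartial i f (setc p j t)) (fun z => Derive (fun t => g t z) (getc p i))); auto.
  apply Schwarz.
  - exists (mkposreal d Hd). intros u v Hu Hv. simpl in Hu, Hv.
    set (q := setc (setc p i u) j v).
    assert (Uq : U q) by (apply HUq; auto).
    assert (Gq1 : getc q i = u) by (unfold q; rewrite getc_setc_neq, getc_setc_eq; auto).
    assert (Gq2 : getc q j = v) by (unfold q; rewrite getc_setc_eq; auto).
    assert (Sq1 : forall z, setc q i z = setc (setc p i z) j v).
    { intros z. unfold q. rewrite setc_setc_neq; auto. rewrite setc_setc_eq. rewrite setc_setc_neq; auto. }
    assert (Sq2 : forall z, setc q j z = setc (setc p i u) j z).
    { intros z. unfold q. rewrite setc_setc_eq. auto. }
    split; [|split; [|split]].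
    + unfold g. rewrite <- Gq1. eapply ex_derive_ext; [|apply (Sm_exd i f q); auto].
      intros t. simpl. rewrite Sq1. auto.
    + unfold g. rewrite <- Gq2. eapply ex_derive_ext; [|apply (Sm_exd j f q); auto].
      intros t. simpl. rewrite Sq2. auto.
    + rewrite <- Gq1. eapply ex_derive_ext; [|apply (Sm_exd i (rpartial j f) q); auto using Sm_partial].
      intros t. simpl. rewrite Sq1. unfold rpartial, g.
      rewrite getc_setc_eq; auto. apply Derive_ext. intros s. rewrite setc_setc_eq. auto.
    + rewrite <- Gq2. eapply ex_derive_ext; [|apply (Sm_exd j (rpartial i f) q); auto using Sm_partial].
      intros t. simpl. rewrite Sq2. unfold rpartial, g.
      rewrite getc_setc_neq, getc_setc_eq; auto. apply Derive_ext. intros s.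
      rewrite setc_setc_neq; auto. rewrite setc_setc_eq. rewrite setc_setc_neq; auto.
  - assert (EqA : forall u v, Derive (fun z => Derive (fun t => g z t) v) u = rpartial i (rpartial j f) (setc (setc p i u) j v)).
    { intros u v. unfold rpartial at 1.
      rewrite (getc_setc_neq _ j i); auto. rewrite getc_setc_eq; auto.
      apply Derive_ext. intros z.
      rewrite (setc_setc_neq _ j i); auto. rewrite setc_setc_eq.
      unfold rpartial, g. rewrite getc_setc_eq; auto.
      apply Derive_ext. intros t. rewrite setc_setc_eq. auto. }
    intros eps.
    destruct (Sm_cont (rpartial i (rpartial j f)) p Hp (Sm_partial _ _ Hi (Sm_partial _ _ Hj Hf)) eps (cond_pos eps)) as [d1 [Hd1 H1]].
    exists (mkposreal d1 Hd1). intros u v Hu Hv. simpl in Hu, Hv.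
    rewrite !EqA. rewrite (setc_getc p i), (setc_getc p j). apply H1.
    apply near_setc2; auto.
  - assert (EqB : forall u v, Derive (fun z => Derive (fun t => g t z) u) v = rpartial j (rpartial i f) (setc (setc p i u) j v)).
    { intros u v. unfold rpartial at 1. rewrite getc_setc_eq; auto.
      apply Derive_ext. intros z. rewrite setc_setc_eq. unfold rpartial, g.
      rewrite (getc_setc_neq _ j i); auto. rewrite getc_setc_eq; auto.
      apply Derive_ext. intros t. rewrite (setc_setc_neq _ j i); auto. rewrite setc_setc_eq.
      reflexivity. }
    intros eps.
    destruct (Sm_cont (rpartial j (rpartial i f)) p Hp (Sm_partial _ _ Hj (Sm_partial _ _ Hi Hf)) eps (cond_pos eps)) as [d1 [Hd1 H1]].
    exists (mkposreal d1 Hd1). intros u v Hu Hv. simpl in Hu, Hv.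
    rewrite !EqB. rewrite (setc_getc p i), (setc_getc p j). apply H1.
    apply near_setc2; auto.
Qed.


Lemma rp_plus i f g p : (i < 5)%nat -> U p -> Sm f -> Sm g ->
  rpartial i (fun q => f q + g q) p = rpartial i f p + rpartial i g p.
Proof.
  intros Hi Hp Hf Hg. unfold rpartial.
  apply (Derive_plus (fun t => f (setc p i t)) (fun t => g (setc p i t))); apply Sm_exd; auto.
Qed.
Lemma rp_minus i f g p : (i < 5)%nat -> U p -> Sm f -> Sm g ->
  rpartial i (fun q => f q - g q) p = rpartial i f p - rpartial i g p.
Proof.
  intros Hi Hp Hf Hg. unfold rpartial.
  apply (Derive_minus (fun t => f (setc p i t)) (fun t => g (setc p i t))); apply Sm_exd; auto.
Qed.
Lemma rp_mult i f g p : (i < 5)%nat -> U p -> Sm f -> Sm g ->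
  rpartial i (fun q => f q * g q) p = rpartial i f p * g p + f p * rpartial i g p.
Proof.
  intros Hi Hp Hf Hg. unfold rpartial.
  rewrite (Derive_mult (fun t => f (setc p i t)) (fun t => g (setc p i t))); try (apply Sm_exd; auto).
  rewrite !setc_getc. reflexivity.
Qed.
Lemma rp_opp i f p : rpartial i (fun q => - f q) p = - rpartial i f p.
Proof. unfold rpartial. apply (Derive_opp (fun t => f (setc p i t))). Qed.
Lemma rp_const i c p : rpartial i (fun _ => c) p = 0.
Proof. unfold rpartial. apply Derive_const. Qed.

Definition SmC (f : cfun) := Sm (fun q => fst (f q)) /\ Sm (fun q => snd (f q)).

Lemma SmC_ext f g : (forall q, U q -> f q = g q) -> SmC f -> SmC g.
Proof.
  intros H [H1 H2]. split.
  - apply (Sm_ext (fun q => fst (f q))); auto. intros q Hq; rewrite H; auto.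
  - apply (Sm_ext (fun q => snd (f q))); auto. intros q Hq; rewrite H; auto.
Qed.
Lemma SmC_const (c : C) : SmC (fun _ => c).
Proof. split; apply Sm_const. Qed.
Lemma SmC_plus f g : SmC f -> SmC g -> SmC (fun q => (f q + g q)%C).
Proof. intros [H1 H2] [G1 G2]. split; simpl; apply Sm_plus; auto. Qed.
Lemma SmC_opp f : SmC f -> SmC (fun q => (- f q)%C).
Proof. intros [H1 H2]. split; simpl; apply Sm_opp; auto. Qed.
Lemma SmC_minus f g : SmC f -> SmC g -> SmC (fun q => (f q - g q)%C).
Proof. intros Hf Hg. apply (SmC_plus f (fun q => (- g q)%C)); auto. apply SmC_opp; auto. Qed.
Lemma SmC_mult f g : SmC f -> SmC g -> SmC (fun q => (f q * g q)%C).
Proof.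
  intros [H1 H2] [G1 G2]. split; simpl.
  - apply Sm_minus; apply Sm_mult; auto.
  - apply Sm_plus; apply Sm_mult; auto.
Qed.
Lemma SmC_conj f : SmC f -> SmC (cconj f).
Proof. intros [H1 H2]. split; simpl; auto. apply Sm_opp; auto. Qed.
Lemma SmC_RtoC f : Sm f -> SmC (fun q => RtoC (f q)).
Proof. intros H. split; simpl; auto. apply Sm_const. Qed.

Lemma Cnz_norm (z : C) : z <> 0%C -> fst z ^ 2 + snd z ^ 2 <> 0.
Proof.
  intros H E. apply H. destruct z as [a b]. simpl in E.
  assert (a = 0) by nra. assert (b = 0) by nra. subst. reflexivity.
Qed.

Lemma SmC_inv f : SmC f -> (forall q, U q -> f q <> 0%C) -> SmC (fun q => (/ f q)%C).
Proof.
  intros [H1 H2] Hnz.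
  assert (Hd : Sm (fun q => / (fst (f q) ^ 2 + snd (f q) ^ 2))).
  { apply Sm_inv; auto.
    - eapply Sm_ext; [|apply (Sm_plus (fun q => fst (f q) * fst (f q)) (fun q => snd (f q) * snd (f q))); apply Sm_mult; auto].
      intros; simpl; ring.
    - intros q Hq. apply Cnz_norm. auto. }
  split; simpl.
  - apply Sm_mult; auto.
  - apply Sm_mult; auto. apply Sm_opp; auto.
Qed.
Lemma SmC_div f g : SmC f -> SmC g -> (forall q, U q -> g q <> 0%C) -> SmC (fun q => (f q / g q)%C).
Proof. intros. apply (SmC_mult f (fun q => / g q)%C); auto. apply SmC_inv; auto. Qed.
Lemma SmC_pow f n : SmC f -> SmC (fun q => (f q ^ n)%C).
Proof.
  intros Hf. induction n as [|n IH]; simpl.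
  - apply SmC_const.
  - apply (SmC_mult f (fun q => (f q ^ n)%C)); auto.
Qed.
Lemma SmC_cpartial i f : (i < 5)%nat -> SmC f -> SmC (cpartial i f).
Proof. intros Hi [H1 H2]. split; simpl; apply Sm_partial; auto. Qed.

Open Scope C_scope.

Lemma cp_ext i f g p : (i < 5)%nat -> U p -> (forall q, U q -> f q = g q) ->
  cpartial i f p = cpartial i g p.
Proof.
  intros Hi Hp H. unfold cpartial. f_equal; apply rpartial_ext_U; auto; intros q Hq; rewrite H; auto.
Qed.
Lemma cp_plus i f g p : (i < 5)%nat -> U p -> SmC f -> SmC g ->
  cpartial i (fun q => f q + g q) p = cpartial i f p + cpartial i g p.
Proof.
  intros Hi Hp [F1 F2] [G1 G2]. unfold cpartial. simpl.
  rewrite !rp_plus; auto.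
Qed.
Lemma cp_opp i f p : cpartial i (fun q => - f q) p = - cpartial i f p.
Proof. unfold cpartial. simpl. rewrite !rp_opp. reflexivity. Qed.
Lemma cp_minus i f g p : (i < 5)%nat -> U p -> SmC f -> SmC g ->
  cpartial i (fun q => f q - g q) p = cpartial i f p - cpartial i g p.
Proof.
  intros Hi Hp Hf Hg. unfold Cminus.
  rewrite (cp_plus i f (fun q => - g q)); auto. rewrite cp_opp. reflexivity.
  apply SmC_opp; auto.
Qed.
Lemma cp_mult i f g p : (i < 5)%nat -> U p -> SmC f -> SmC g ->
  cpartial i (fun q => f q * g q) p = cpartial i f p * g p + f p * cpartial i g p.
Proof.
  intros Hi Hp [F1 F2] [G1 G2]. unfold cpartial. simpl.
  rewrite rp_minus, rp_plus, !rp_mult; auto; try (apply Sm_mult; auto).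
  apply injective_projections; simpl; ring.
Qed.
Lemma cp_const i (c : C) p : cpartial i (fun _ => c) p = 0.
Proof. unfold cpartial. rewrite !rp_const. reflexivity. Qed.
Lemma cp_conj i f p : cpartial i (cconj f) p = Cconj (cpartial i f p).
Proof. unfold cpartial, cconj. simpl. rewrite rp_opp. reflexivity. Qed.
Lemma cp_RtoC i f p : cpartial i (fun q => RtoC (f q)) p = RtoC (rpartial i f p).
Proof. unfold cpartial. simpl. rewrite rp_const. reflexivity. Qed.
Lemma cp_inv i f p : (i < 5)%nat -> U p -> SmC f -> (forall q, U q -> f q <> 0) ->
  cpartial i (fun q => / f q) p = - cpartial i f p / (f p * f p).
Proof.
  intros Hi Hp Hf Hnz.
  assert (Hinv : SmC (fun q => / f q)) by (apply SmC_inv; auto).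
  assert (E : cpartial i (fun q => f q * / f q) p = 0).
  { rewrite (cp_ext i _ (fun _ => 1)); auto. apply cp_const. intros q Hq. field. auto. }
  rewrite cp_mult in E; auto.
  generalize (Hnz p Hp). intros Hn.
  apply (f_equal (fun z => z / (f p * f p))) in E.
  replace (cpartial i (fun q => / f q) p) with
    ((cpartial i f p * / f p + f p * cpartial i (fun q => / f q) p) / (f p * f p) * f p - cpartial i f p / (f p * f p)).
  rewrite E. field. auto.
  field. auto.
Qed.
Lemma cp_comm i j f p : (i < 5)%nat -> (j < 5)%nat -> U p -> SmC f ->
  cpartial i (cpartial j f) p = cpartial j (cpartial i f) p.
Proof.
  intros Hi Hj Hp [F1 F2]. unfold cpartial at 1 3. simpl.
  rewrite (rpartial_comm i j (fun q => fst (f q))); auto.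
  rewrite (rpartial_comm i j (fun q => snd (f q))); auto.
Qed.


Definition rA (i : nat) : nat := match i with 0%nat | 2%nat => 0%nat | 1%nat | 3%nat => 2%nat | _ => 4%nat end.
Definition rB (i : nat) : nat := match i with 0%nat | 2%nat => 1%nat | 1%nat | 3%nat => 3%nat | _ => 4%nat end.
Definition wA (i : nat) : C := match i with 0%nat | 1%nat | 2%nat | 3%nat => / 2 | _ => 1 end.
Definition wB (i : nat) : C := match i with 0%nat | 1%nat => - Ci / 2 | 2%nat | 3%nat => Ci / 2 | _ => 0 end.

Lemma rA_lt i : (rA i < 5)%nat.
Proof. destruct i as [|[|[|[|i]]]]; simpl; lia. Qed.
Lemma rB_lt i : (rB i < 5)%nat.
Proof. destruct i as [|[|[|[|i]]]]; simpl; lia. Qed.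

Lemma Dc_repr i g p : (i < 5)%nat ->
  Dcoord i g p = wA i * cpartial (rA i) g p + wB i * cpartial (rB i) g p.
Proof.
  intros Hi. destruct i as [|[|[|[|[|i]]]]]; try lia; simpl; unfold Dz, Dzb, Dv; field.
Qed.

Lemma Dc_repr_fun i g : (i < 5)%nat ->
  Dcoord i g = fun p => wA i * cpartial (rA i) g p + wB i * cpartial (rB i) g p.
Proof. intros Hi. apply functional_extensionality. intros p. apply Dc_repr; auto. Qed.

Lemma SmC_Dc i g : (i < 5)%nat -> SmC g -> SmC (Dcoord i g).
Proof.
  intros Hi Hg. rewrite Dc_repr_fun; auto.
  apply SmC_plus; apply (SmC_mult (fun _ => _)); try apply SmC_const; apply SmC_cpartial; auto using rA_lt, rB_lt.
Qed.

Lemma cp_cmult i (c : C) f p : (i < 5)%nat -> U p -> SmC f ->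
  cpartial i (fun q => c * f q) p = c * cpartial i f p.
Proof.
  intros Hi Hp Hf. rewrite (cp_mult i (fun _ => c) f); auto. rewrite cp_const. ring.
  apply SmC_const.
Qed.

Lemma Dc_plus i f g p : (i < 5)%nat -> U p -> SmC f -> SmC g ->
  Dcoord i (fun q => f q + g q) p = Dcoord i f p + Dcoord i g p.
Proof.
  intros Hi Hp Hf Hg. rewrite !Dc_repr; auto. rewrite !cp_plus; auto using rA_lt, rB_lt. ring.
Qed.
Lemma Dc_mult i f g p : (i < 5)%nat -> U p -> SmC f -> SmC g ->
  Dcoord i (fun q => f q * g q) p = Dcoord i f p * g p + f p * Dcoord i g p.
Proof.
  intros Hi Hp Hf Hg. rewrite !Dc_repr; auto. rewrite !cp_mult; auto using rA_lt, rB_lt. ring.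
Qed.
Lemma Dc_const i (c : C) p : (i < 5)%nat -> Dcoord i (fun _ => c) p = 0.
Proof. intros Hi. rewrite Dc_repr; auto. rewrite !cp_const. ring. Qed.
Lemma Dc_ext i f g p : (i < 5)%nat -> U p -> (forall q, U q -> f q = g q) ->
  Dcoord i f p = Dcoord i g p.
Proof. intros Hi Hp H. rewrite !Dc_repr; auto. rewrite (cp_ext (rA i) f g), (cp_ext (rB i) f g); auto using rA_lt, rB_lt. Qed.

Lemma Dc_expand i j g p : (i < 5)%nat -> (j < 5)%nat -> U p -> SmC g ->
  Dcoord i (Dcoord j g) p =
    wA i * (wA j * cpartial (rA i) (cpartial (rA j) g) p + wB j * cpartial (rA i) (cpartial (rB j) g) p)
  + wB i * (wA j * cpartial (rB i) (cpartial (rA j) g) p + wB j * cpartial (rB i) (cpartial (rB j) g) p).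
Proof.
  intros Hi Hj Hp Hg. rewrite Dc_repr; auto. rewrite (Dc_repr_fun j); auto.
  rewrite !cp_plus; auto using rA_lt, rB_lt;
    try (apply (SmC_mult (fun _ => _)); try apply SmC_const; apply SmC_cpartial; auto using rA_lt, rB_lt).
  rewrite !cp_cmult; auto using rA_lt, rB_lt; try (apply SmC_cpartial; auto using rA_lt, rB_lt).
Qed.

Lemma Dc_comm i j g p : (i < 5)%nat -> (j < 5)%nat -> U p -> SmC g ->
  Dcoord i (Dcoord j g) p = Dcoord j (Dcoord i g) p.
Proof.
  intros Hi Hj Hp Hg. rewrite !Dc_expand; auto.
  rewrite (cp_comm (rA i) (rA j)), (cp_comm (rA i) (rB j)), (cp_comm (rB i) (rA j)), (cp_comm (rB i) (rB j));
    auto using rA_lt, rB_lt. ring.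
Qed.

Lemma Dc_conj i g p : (i < 5)%nat ->
  Cconj (Dcoord i g p) = Dcoord (match i with 0%nat => 2%nat | 1%nat => 3%nat | 2%nat => 0%nat | 3%nat => 1%nat | _ => 4%nat end) (cconj g) p.
Proof.
  intros Hi. destruct i as [|[|[|[|[|i]]]]]; try lia; simpl; unfold Dz, Dzb, Dv; rewrite !cp_conj;
  apply injective_projections; simpl; field.
Qed.

Definition vf := nat -> cfun.
Definition vap (X : vf) (g : cfun) (p : pt) : C :=
  X 0%nat p * Dcoord 0 g p + X 1%nat p * Dcoord 1 g p + X 2%nat p * Dcoord 2 g p
  + X 3%nat p * Dcoord 3 g p + X 4%nat p * Dcoord 4 g p.
Definition SmV (X : vf) := forall i, (i < 5)%nat -> SmC (X i).
Definition brk (X Y : vf) : vf := fun i q => vap X (Y i) q - vap Y (X i) q.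

Lemma SmC_app X g : SmV X -> SmC g -> SmC (vap X g).
Proof.
  intros HX Hg. unfold vap.
  repeat apply SmC_plus; apply SmC_mult; try apply HX; try lia; apply SmC_Dc; auto; lia.
Qed.
Lemma app_plus X f g p : U p -> SmC f -> SmC g -> vap X (fun q => f q + g q) p = vap X f p + vap X g p.
Proof. intros. unfold vap. rewrite !Dc_plus; auto; try lia. ring. Qed.
Lemma app_mult X f g p : U p -> SmC f -> SmC g -> vap X (fun q => f q * g q) p = vap X f p * g p + f p * vap X g p.
Proof. intros. unfold vap. rewrite !Dc_mult; auto; try lia. ring. Qed.
Lemma app_const X (c : C) p : vap X (fun _ => c) p = 0.
Proof. unfold vap. rewrite !Dc_const; try lia. ring. Qed.
Lemma app_ext X f g p : U p -> (forall q, U q -> f q = g q) -> vap X f p = vap X g p.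
Proof. intros. unfold vap. rewrite !(Dc_ext _ f g); auto; lia. Qed.
Lemma app_opp X f p : U p -> SmC f -> vap X (fun q => - f q) p = - vap X f p.
Proof.
  intros Hp Hf. rewrite (app_ext X _ (fun q => (-1) * f q)); auto.
  rewrite app_mult; auto. rewrite app_const. ring. apply SmC_const.
  intros; ring.
Qed.
Lemma app_minus X f g p : U p -> SmC f -> SmC g -> vap X (fun q => f q - g q) p = vap X f p - vap X g p.
Proof. intros. unfold Cminus. rewrite app_plus; auto. rewrite app_opp; auto. apply SmC_opp; auto. Qed.
Lemma app_inv X f p : U p -> SmC f -> (forall q, U q -> f q <> 0) ->
  vap X (fun q => / f q) p = - vap X f p / (f p * f p).
Proof.
  intros Hp Hf Hnz.
  assert (Hinv : SmC (fun q => / f q)) by (apply SmC_inv; auto).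
  assert (E : vap X (fun q => f q * / f q) p = 0).
  { rewrite (app_ext X _ (fun _ => 1)); auto. apply app_const. intros q Hq. field. auto. }
  rewrite app_mult in E; auto.
  generalize (Hnz p Hp). intros Hn.
  replace (vap X (fun q => / f q) p) with
    ((vap X f p * / f p + f p * vap X (fun q => / f q) p) / f p - vap X f p / (f p * f p)).
  rewrite E. field. auto.
  field. auto.
Qed.
Lemma app_div X f g p : U p -> SmC f -> SmC g -> (forall q, U q -> g q <> 0) ->
  vap X (fun q => f q / g q) p = (vap X f p * g p - f p * vap X g p) / (g p * g p).
Proof.
  intros Hp Hf Hg Hnz. unfold Cdiv at 1.
  rewrite (app_mult X f (fun q => / g q)); auto. rewrite app_inv; auto.
  field. auto. apply SmC_inv; auto.
Qed.

Lemma Dc_app i Y g p : (i < 5)%nat -> U p -> SmV Y -> SmC g ->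
  Dcoord i (vap Y g) p =
    (Dcoord i (Y 0%nat) p * Dcoord 0 g p + Y 0%nat p * Dcoord i (Dcoord 0 g) p)
  + (Dcoord i (Y 1%nat) p * Dcoord 1 g p + Y 1%nat p * Dcoord i (Dcoord 1 g) p)
  + (Dcoord i (Y 2%nat) p * Dcoord 2 g p + Y 2%nat p * Dcoord i (Dcoord 2 g) p)
  + (Dcoord i (Y 3%nat) p * Dcoord 3 g p + Y 3%nat p * Dcoord i (Dcoord 3 g) p)
  + (Dcoord i (Y 4%nat) p * Dcoord 4 g p + Y 4%nat p * Dcoord i (Dcoord 4 g) p).
Proof.
  intros Hi Hp HY Hg. unfold vap at 1.
  assert (S0 : forall k, (k < 5)%nat -> SmC (fun q => Y k q * Dcoord k g q)).
  { intros k Hk. apply SmC_mult; auto. apply SmC_Dc; auto. }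
  rewrite !Dc_plus; auto;
    try (repeat apply SmC_plus; apply S0; lia); try (apply S0; lia).
  rewrite !Dc_mult; auto; try (apply HY; lia); try (apply SmC_Dc; auto; lia).
Qed.

Lemma app_comm X Y g p : U p -> SmV X -> SmV Y -> SmC g ->
  vap X (vap Y g) p - vap Y (vap X g) p = vap (brk X Y) g p.
Proof.
  intros Hp HX HY Hg. unfold vap at 1 3. rewrite !Dc_app; auto; try lia.
  unfold brk, vap.
  rewrite (Dc_comm 1 0 g), (Dc_comm 2 0 g), (Dc_comm 3 0 g), (Dc_comm 4 0 g),
    (Dc_comm 2 1 g), (Dc_comm 3 1 g), (Dc_comm 4 1 g), (Dc_comm 3 2 g), (Dc_comm 4 2 g),
    (Dc_comm 4 3 g); auto; try lia.
  ring.
Qed.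

End Smooth.

Open Scope C_scope.


Lemma alg_c04 (th : nat -> nat -> cfun) (c : nat -> nat -> cfun) (X Y : nat -> C) (p : pt) :
  (th 0%nat 0%nat p * X 0%nat + th 0%nat 1%nat p * X 1%nat + th 0%nat 2%nat p * X 2%nat + th 0%nat 3%nat p * X 3%nat + th 0%nat 4%nat p * X 4%nat) = 1 -> (th 0%nat 0%nat p * Y 0%nat + th 0%nat 1%nat p * Y 1%nat + th 0%nat 2%nat p * Y 2%nat + th 0%nat 3%nat p * Y 3%nat + th 0%nat 4%nat p * Y 4%nat) = 0 -> (th 1%nat 0%nat p * X 0%nat + th 1%nat 1%nat p * X 1%nat + th 1%nat 2%nat p * X 2%nat + th 1%nat 3%nat p * X 3%nat + th 1%nat 4%nat p * X 4%nat) = 0 -> (th 1%nat 0%nat p * Y 0%nat + th 1%nat 1%nat p * Y 1%nat + th 1%nat 2%nat p * Y 2%nat + th 1%nat 3%nat p * Y 3%nat + th 1%nat 4%nat p * Y 4%nat) = 0 -> (th 2%nat 0%nat p * X 0%nat + th 2%nat 1%nat p * X 1%nat + th 2%nat 2%nat p * X 2%nat + th 2%nat 3%nat p * X 3%nat + th 2%nat 4%nat p * X 4%nat) = 0 -> (th 2%nat 0%nat p * Y 0%nat + th 2%nat 1%nat p * Y 1%nat + th 2%nat 2%nat p * Y 2%nat + th 2%nat 3%nat p * Y 3%nat + th 2%nat 4%nat p * Y 4%nat) = 0 -> (th 3%nat 0%nat p * X 0%nat + th 3%nat 1%nat p * X 1%nat + th 3%nat 2%nat p * X 2%nat + th 3%nat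 3%nat p * X 3%nat + th 3%nat 4%nat p * X 4%nat) = 0 -> (th 3%nat 0%nat p * Y 0%nat + th 3%nat 1%nat p * Y 1%nat + th 3%nat 2%nat p * Y 2%nat + th 3%nat 3%nat p * Y 3%nat + th 3%nat 4%nat p * Y 4%nat) = 0 -> (th 4%nat 0%nat p * X 0%nat + th 4%nat 1%nat p * X 1%nat + th 4%nat 2%nat p * X 2%nat + th 4%nat 3%nat p * X 3%nat + th 4%nat 4%nat p * X 4%nat) = 0 -> (th 4%nat 0%nat p * Y 0%nat + th 4%nat 1%nat p * Y 1%nat + th 4%nat 2%nat p * Y 2%nat + th 4%nat 3%nat p * Y 3%nat + th 4%nat 4%nat p * Y 4%nat) = 1 ->
  X 0%nat * Y 0%nat * expand2 th c 0%nat 0%nat p + X 0%nat * Y 1%nat * expand2 th c 0%nat 1%nat p + X 0%nat * Y 2%nat * expand2 th c 0%nat 2%nat p + X 0%nat * Y 3%nat * expand2 th c 0%nat 3%nat p + X 0%nat * Y 4%nat * expand2 th c 0%nat 4%nat p + X 1%nat * Y 0%nat * expand2 th c 1%nat 0%nat p + X 1%nat * Y 1%nat * expand2 th c 1%nat 1%nat p + X 1%nat * Y 2%nat * expand2 th c 1%nat 2%nat p + X 1%nat * Y 3%nat * expand2 th c 1%nat 3%nat p + X 1%nat * Y 4%nat * expand2 th c 1%nat 4%nat p + X 2%nat * Y 0%nat * expand2 th c 2%nat 0%nat p + X 2%nat * Y 1%nat * expand2 th c 2%nat 1%nat p + X 2%nat * Y 2%nat * expand2 th c 2%nat 2%nat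 p + X 2%nat * Y 3%nat * expand2 th c 2%nat 3%nat p + X 2%nat * Y 4%nat * expand2 th c 2%nat 4%nat p + X 3%nat * Y 0%nat * expand2 th c 3%nat 0%nat p + X 3%nat * Y 1%nat * expand2 th c 3%nat 1%nat p + X 3%nat * Y 2%nat * expand2 th c 3%nat 2%nat p + X 3%nat * Y 3%nat * expand2 th c 3%nat 3%nat p + X 3%nat * Y 4%nat * expand2 th c 3%nat 4%nat p + X 4%nat * Y 0%nat * expand2 th c 4%nat 0%nat p + X 4%nat * Y 1%nat * expand2 th c 4%nat 1%nat p + X 4%nat * Y 2%nat * expand2 th c 4%nat 2%nat p + X 4%nat * Y 3%nat * expand2 th c 4%nat 3%nat p + X 4%nat * Y 4%nat * expand2 th c 4%nat 4%nat p = c 0%nat 4%nat p.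
Proof.
  intros HX0 HY0 HX1 HY1 HX2 HY2 HX3 HY3 HX4 HY4.
  set (tX := fun a => (th a 0%nat p * X 0%nat + th a 1%nat p * X 1%nat + th a 2%nat p * X 2%nat + th a 3%nat p * X 3%nat + th a 4%nat p * X 4%nat)).
  set (tY := fun a => (th a 0%nat p * Y 0%nat + th a 1%nat p * Y 1%nat + th a 2%nat p * Y 2%nat + th a 3%nat p * Y 3%nat + th a 4%nat p * Y 4%nat)).
  transitivity (c 0%nat 1%nat p * (tX 0%nat * tY 1%nat - tY 0%nat * tX 1%nat) + c 0%nat 2%nat p * (tX 0%nat * tY 2%nat - tY 0%nat * tX 2%nat) + c 0%nat 3%nat p * (tX 0%nat * tY 3%nat - tY 0%nat * tX 3%nat) + c 0%nat 4%nat p * (tX 0%nat * tY 4%nat - tY 0%nat * tX 4%nat) + c 1%nat 2%nat p * (tX 1%nat * tY 2%nat - tY 1%nat * tX 2%nat) + c 1%nat 3%nat p * (tX 1%nat * tY 3%nat - tY 1%nat * tX 3%nat) + c 1%nat 4%nat p * (tX 1%nat * tY 4%nat - tY 1%nat * tX 4%nat) + c 2%nat 3%nat p * (tX 2%nat * tY 3%nat - tY 2%nat * tX 3%nat) + c 2%nat 4%nat p * (tX 2%nat * tY 4%nat - tY 2%nat * tX 4%nat) + c 3%nat 4%nat p * (tX 3%nat * tY 4%nat - tY 3%nat * tX 4%nat)).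
  - unfold expand2, pairs5, wedge, tX, tY. cbn [fold_right fst snd]. ring.
  - unfold tX, tY. cbv beta. rewrite HX0, HY0, HX1, HY1, HX2, HY2, HX3, HY3, HX4, HY4. ring.
Qed.

Section Main.
Context {U : pt -> Prop} (HU : open_pt U) (F : pt -> R) (HF : smooth_on U F)
  (Hell : forall p, U p -> ell F p <> 0%C) (Hrk : forall p, U p -> levi_rank_one F p)
  (Hm : forall p, U p -> Lb1k F p <> 0%C).

Local Notation SmC := (@SmC U).
Local Notation SmV := (@SmV U).

Lemma sConst (c : C) : SmC (fun _ => c). Proof. exact (SmC_const HU c). Qed.
Lemma sPlus f g : SmC f -> SmC g -> SmC (fun q => f q + g q). Proof. exact (SmC_plus HU f g). Qed.
Lemma sMinus f g : SmC f -> SmC g -> SmC (fun q => f q - g q). Proof. exact (SmC_minus HU f g). Qed.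
Lemma sMult f g : SmC f -> SmC g -> SmC (fun q => f q * g q). Proof. exact (SmC_mult HU f g). Qed.
Lemma sOpp f : SmC f -> SmC (fun q => - f q). Proof. exact (SmC_opp HU f). Qed.
Lemma sConj f : SmC f -> SmC (cconj f). Proof. exact (SmC_conj HU f). Qed.
Lemma sPow f n : SmC f -> SmC (fun q => f q ^ n). Proof. intros; exact (SmC_pow HU f n H). Qed.
Lemma sApp X g : SmV X -> SmC g -> SmC (vap X g). Proof. exact (SmC_app HU X g). Qed.
Lemma sDiv f g : SmC f -> SmC g -> (forall q, U q -> g q <> 0) -> SmC (fun q => f q / g q).
Proof. exact (SmC_div HU f g). Qed.
Lemma sInv f : SmC f -> (forall q, U q -> f q <> 0) -> SmC (fun q => / f q).
Proof. exact (SmC_inv HU f). Qed.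
Local Notation aMult := (app_mult HU).
Local Notation cpPlus := (@cp_plus U).
Local Notation cpMinus := (@cp_minus U).
Local Notation cpMult := (cp_mult HU).
Local Notation aPlus := (@app_plus U).
Local Notation DcPlus := (@Dc_plus U).
Local Notation aExt := (app_ext HU).
Local Notation aOpp := (app_opp HU).
Local Notation aMinus := (app_minus HU).
Local Notation aInv := (app_inv HU).
Local Notation aDiv := (app_div HU).
Local Notation aComm := (app_comm HU).
Local Notation DcComm := (Dc_comm HU).
Local Notation DcMult := (Dc_mult HU).
Local Notation DcExt := (Dc_ext HU).
Create HintDb smc.
Ltac smc := repeat (first [ assumption | solve [eauto with smc] | apply sApp | apply sConst | apply sPlus | apply sMinus
  | apply sMult | apply sOpp | apply sConj | apply sPow ]).

Lemma SmFc : SmC (Fc F).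
Proof. apply SmC_RtoC. exact HU. apply smooth_Sm. exact HF. Qed.
Hint Resolve SmFc : smc.

Lemma SmDc i g : (i < 5)%nat -> SmC g -> SmC (Dcoord i g).
Proof. intros. apply SmC_Dc; auto. Qed.
Lemma SmDz1 g : SmC g -> SmC (Dz 1 g).
Proof. intros. exact (SmDc 0 g ltac:(lia) H). Qed.
Lemma SmDz2 g : SmC g -> SmC (Dz 2 g).
Proof. intros. exact (SmDc 1 g ltac:(lia) H). Qed.
Lemma SmDzb1 g : SmC g -> SmC (Dzb 1 g).
Proof. intros. exact (SmDc 2 g ltac:(lia) H). Qed.
Lemma SmDzb2 g : SmC g -> SmC (Dzb 2 g).
Proof. intros. exact (SmDc 3 g ltac:(lia) H). Qed.
Lemma SmDv g : SmC g -> SmC (Dv g).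
Proof. intros. exact (SmDc 4 g ltac:(lia) H). Qed.
Hint Resolve SmDz1 SmDz2 SmDzb1 SmDzb2 SmDv : smc.

Lemma Dv_Fc p : Dv (Fc F) p = RtoC (rpartial 4 F p).
Proof. unfold Dv, Fc. apply cp_RtoC. Qed.

Lemma den_nz p : (1 + Ci * Dv (Fc F) p) <> 0.
Proof.
  rewrite Dv_Fc. intros E. apply (f_equal fst) in E. simpl in E. lra.
Qed.

Lemma SmA j : SmC (Acoef F j).
Proof.
  unfold Acoef. apply sDiv.
  - apply sMult. apply sConst. destruct j as [|[|j]]; smc.
  - smc.
  - intros q _. apply den_nz.
Qed.
Lemma SmAb j : SmC (Abcoef F j).
Proof. unfold Abcoef. apply sConj. apply SmA. Qed.
Hint Resolve SmA SmAb : smc.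

Definition c0 : cfun := fun _ => 0.
Definition c1 : cfun := fun _ => 1.
Definition vL1 : vf := fun i => match i with 0%nat => c1 | 4%nat => Acoef F 1 | _ => c0 end.
Definition vL2 : vf := fun i => match i with 1%nat => c1 | 4%nat => Acoef F 2 | _ => c0 end.
Definition vLb1 : vf := fun i => match i with 2%nat => c1 | 4%nat => Abcoef F 1 | _ => c0 end.
Definition vLb2 : vf := fun i => match i with 3%nat => c1 | 4%nat => Abcoef F 2 | _ => c0 end.
Definition vT : vf := fun i => match i with 4%nat => c1 | _ => c0 end.
Definition kA : cfun := fun q => kk F q * Acoef F 1 q + Acoef F 2 q.
Definition kbAb : cfun := fun q => kkb F q * Abcoef F 1 q + Abcoef F 2 q.
Definition vK : vf := fun i => match i with 0%nat => kk F | 1%nat => c1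
  | 4%nat => kA | _ => c0 end.
Definition vKb : vf := fun i => match i with 2%nat => kkb F | 3%nat => c1
  | 4%nat => kbAb | _ => c0 end.

Lemma Lop1_app g : Lop F 1 g = vap vL1 g.
Proof. apply functional_extensionality. intros q. unfold Lop, vap, vL1, c0, c1; simpl. ring. Qed.
Lemma Lop2_app g : Lop F 2 g = vap vL2 g.
Proof. apply functional_extensionality. intros q. unfold Lop, vap, vL2, c0, c1; simpl. ring. Qed.
Lemma Lbop1_app g : Lbop F 1 g = vap vLb1 g.
Proof. apply functional_extensionality. intros q. unfold Lbop, vap, vLb1, c0, c1; simpl. ring. Qed.
Lemma Lbop2_app g : Lbop F 2 g = vap vLb2 g.
Proof. apply functional_extensionality. intros q. unfold Lbop, vap, vLb2, c0, c1; simpl. ring. Qed.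
Lemma Kop_app g : Kop F g = vap vK g.
Proof. apply functional_extensionality. intros q. unfold Kop, Lop, vap, vK, kA, c0, c1; simpl. ring. Qed.
Lemma Kbop_app g : Kbop F g = vap vKb g.
Proof. apply functional_extensionality. intros q. unfold Kbop, Lbop, vap, vKb, kbAb, c0, c1; simpl. ring. Qed.
Lemma Dv_app g : Dv g = vap vT g.
Proof. apply functional_extensionality. intros q. unfold vap, vT, c0, c1; simpl. ring. Qed.

Lemma SmL1 g : SmC g -> SmC (Lop F 1 g).
Proof. intros. unfold Lop. smc. Qed.
Lemma SmL2 g : SmC g -> SmC (Lop F 2 g).
Proof. intros. unfold Lop. smc. Qed.
Lemma SmLb1 g : SmC g -> SmC (Lbop F 1 g).
Proof. intros. unfold Lbop. smc. Qed.
Lemma SmLb2 g : SmC g -> SmC (Lbop F 2 g).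
Proof. intros. unfold Lbop. smc. Qed.
Hint Resolve SmL1 SmL2 SmLb1 SmLb2 : smc.

Lemma SmLevi i j : (i = 1 \/ i = 2)%nat -> (j = 1 \/ j = 2)%nat -> SmC (levi F i j).
Proof. intros [-> | ->] [-> | ->]; unfold levi; smc. Qed.

Lemma app_cmult X (c : C) f p : U p -> SmC f -> vap X (fun q => c * f q) p = c * vap X f p.
Proof. intros. rewrite (aMult X (fun _ => c) f); auto. rewrite app_const. ring. apply sConst. Qed.
Lemma app_cplus X (c : C) f p : U p -> SmC f -> vap X (fun q => c + f q) p = vap X f p.
Proof. intros. rewrite (aPlus X (fun _ => c) f); auto. rewrite app_const. ring. apply sConst. Qed.

Lemma I1 p : U p -> vap vL1 (Acoef F 2) p = vap vL2 (Acoef F 1) p.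
Proof.
  intros Hp. unfold Acoef.
  assert (Hn : forall q, U q -> 1 + Ci * Dv (Fc F) q <> 0) by (intros; apply den_nz).
  rewrite !aDiv; auto; try smc.
  repeat (rewrite app_cmult || rewrite app_cplus); auto; try smc.
  change (Dz 1 (Fc F)) with (Dcoord 0 (Fc F)).
  change (Dz 2 (Fc F)) with (Dcoord 1 (Fc F)).
  change (Dv (Fc F)) with (Dcoord 4 (Fc F)).
  unfold vap, vL1, vL2, c0, c1, Acoef.
  change (Dz 1 (Fc F)) with (Dcoord 0 (Fc F)).
  change (Dz 2 (Fc F)) with (Dcoord 1 (Fc F)).
  change (Dv (Fc F)) with (Dcoord 4 (Fc F)).
  rewrite (DcComm 0 1), (DcComm 4 1), (DcComm 4 0); auto; try lia; try smc.
  generalize (den_nz p). change (Dv (Fc F)) with (Dcoord 4 (Fc F)). intros.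
  field. auto.
Qed.

Remove Hints SmDz1 SmDz2 SmDzb1 SmDzb2 SmDv SmL1 SmL2 SmLb1 SmLb2 : smc.

Lemma cconj_invol g : cconj (cconj g) = g.
Proof. apply functional_extensionality. intros q. unfold cconj. apply Cconj_conj. Qed.
Lemma Ab_conj j : cconj (Abcoef F j) = Acoef F j.
Proof. unfold Abcoef. apply cconj_invol. Qed.

Lemma conj_L1 g p : Cconj (vap vL1 g p) = vap vLb1 (cconj g) p.
Proof.
  unfold vap, vL1, vLb1, c0, c1. rewrite !Cplus_conj, !Cmult_conj.
  rewrite !Dc_conj by lia. simpl.
  replace (Cconj (Acoef F 1 p)) with (Abcoef F 1 p) by reflexivity.
  replace (Cconj 0) with (RtoC 0) by (apply injective_projections; simpl; ring).
  replace (Cconj 1) with (RtoC 1) by (apply injective_projections; simpl; ring). ring.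
Qed.
Lemma conj_L2 g p : Cconj (vap vL2 g p) = vap vLb2 (cconj g) p.
Proof.
  unfold vap, vL2, vLb2, c0, c1. rewrite !Cplus_conj, !Cmult_conj.
  rewrite !Dc_conj by lia. simpl.
  replace (Cconj (Acoef F 2 p)) with (Abcoef F 2 p) by reflexivity.
  replace (Cconj 0) with (RtoC 0) by (apply injective_projections; simpl; ring).
  replace (Cconj 1) with (RtoC 1) by (apply injective_projections; simpl; ring). ring.
Qed.
Lemma conj_Lb1 g p : Cconj (vap vLb1 g p) = vap vL1 (cconj g) p.
Proof.
  rewrite <- (cconj_invol g) at 1. rewrite <- conj_L1. apply Cconj_conj.
Qed.
Lemma conj_Lb2 g p : Cconj (vap vLb2 g p) = vap vL2 (cconj g) p.
Proof.
  rewrite <- (cconj_invol g) at 1. rewrite <- conj_L2. apply Cconj_conj.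
Qed.

Definition lv (i j : nat) : cfun := fun p =>
  vap (match i with 1%nat => vL1 | _ => vL2 end) (Abcoef F j) p
  - vap (match j with 1%nat => vLb1 | _ => vLb2 end) (Acoef F i) p.

Lemma levi_lv i j : (i = 1 \/ i = 2)%nat -> (j = 1 \/ j = 2)%nat -> levi F i j = lv i j.
Proof.
  intros [-> | ->] [-> | ->]; apply functional_extensionality; intros q; unfold levi, lv;
  rewrite ?Lop1_app, ?Lop2_app, ?Lbop1_app, ?Lbop2_app; reflexivity.
Qed.

Lemma lv_conj i j p : (i = 1 \/ i = 2)%nat -> (j = 1 \/ j = 2)%nat -> Cconj (lv i j p) = - lv j i p.
Proof.
  intros [-> | ->] [-> | ->]; unfold lv; rewrite Cminus_conj;
  rewrite ?conj_L1, ?conj_L2, ?conj_Lb1, ?conj_Lb2, ?Ab_conj;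
  unfold Abcoef; ring.
Qed.

Lemma ell_lv p : ell F p = Ci * lv 1 1 p.
Proof. unfold ell, lv. rewrite ?Lop1_app, ?Lbop1_app. reflexivity. Qed.

Lemma lv11_nz p : U p -> lv 1 1 p <> 0.
Proof. intros Hp E. apply (Hell p Hp). rewrite ell_lv, E. ring. Qed.

Lemma Ci_conj : Cconj Ci = - Ci.
Proof. apply injective_projections; simpl; ring. Qed.

Lemma ell_conj p : Cconj (ell F p) = ell F p.
Proof. rewrite ell_lv, Cmult_conj, lv_conj by auto. rewrite Ci_conj. ring. Qed.
Lemma cconj_ell : cconj (ell F) = ell F.
Proof. apply functional_extensionality. intros q. apply ell_conj. Qed.

Lemma kk_lv p : kk F p = - lv 2 1 p / lv 1 1 p.
Proof. unfold kk, lv. rewrite ?Lop1_app, ?Lop2_app, ?Lbop1_app. reflexivity. Qed.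

Lemma kkb_lv p : U p -> kkb F p = - lv 1 2 p / lv 1 1 p.
Proof.
  intros Hp. unfold kkb, cconj. rewrite kk_lv. rewrite Cdiv_conj by (apply lv11_nz; auto).
  rewrite Copp_conj, !lv_conj by auto. field. apply lv11_nz; auto.
Qed.

Lemma P3a p : U p -> kk F p * lv 1 1 p + lv 2 1 p = 0.
Proof. intros Hp. rewrite kk_lv. field. apply lv11_nz; auto. Qed.
Lemma P3b p : U p -> kkb F p * lv 1 1 p + lv 1 2 p = 0.
Proof. intros Hp. rewrite kkb_lv by auto. field. apply lv11_nz; auto. Qed.
Lemma P4 p : U p -> kk F p * kkb F p * lv 1 1 p + kk F p * lv 1 2 p + kkb F p * lv 2 1 p + lv 2 2 p = 0.
Proof.
  intros Hp. destruct (Hrk p Hp) as [Hr _]. rewrite !levi_lv in Hr by auto.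
  rewrite kk_lv, kkb_lv by auto.
  generalize (lv11_nz p Hp). intros Hn.
  transitivity ((lv 1 1 p * lv 2 2 p - lv 1 2 p * lv 2 1 p) / lv 1 1 p).
  field. auto. rewrite Hr. field. auto.
Qed.

Lemma SmV_L1 : SmV vL1.
Proof. intros i Hi. destruct i as [|[|[|[|[|i]]]]]; try lia; unfold vL1, c0, c1; smc. Qed.
Lemma SmV_L2 : SmV vL2.
Proof. intros i Hi. destruct i as [|[|[|[|[|i]]]]]; try lia; unfold vL2, c0, c1; smc. Qed.
Lemma SmV_Lb1 : SmV vLb1.
Proof. intros i Hi. destruct i as [|[|[|[|[|i]]]]]; try lia; unfold vLb1, c0, c1; smc. Qed.
Lemma SmV_Lb2 : SmV vLb2.
Proof. intros i Hi. destruct i as [|[|[|[|[|i]]]]]; try lia; unfold vLb2, c0, c1; smc. Qed.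
Lemma SmV_T : SmV vT.
Proof. intros i Hi. destruct i as [|[|[|[|[|i]]]]]; try lia; unfold vT, c0, c1; smc. Qed.
Hint Resolve SmV_L1 SmV_L2 SmV_Lb1 SmV_Lb2 SmV_T : smc.

Lemma Smlv i j : SmC (lv i j).
Proof.
  unfold lv. apply sMinus; apply sApp; try apply SmA; try apply SmAb;
  destruct i as [|[|i]]; destruct j as [|[|j]]; auto with smc.
Qed.
Hint Resolve Smlv : smc.

Lemma Smkk : SmC (kk F).
Proof.
  assert (E : kk F = fun p => - lv 2 1 p / lv 1 1 p) by (apply functional_extensionality; apply kk_lv).
  rewrite E. apply sDiv; smc. intros q Hq; apply lv11_nz; auto.
Qed.
Lemma Smkkb : SmC (kkb F).
Proof. unfold kkb. apply sConj. apply Smkk. Qed.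
Hint Resolve Smkk Smkkb : smc.
Lemma SmV_K : SmV vK.
Proof. intros i Hi. destruct i as [|[|[|[|[|i]]]]]; try lia; unfold vK, kA, c0, c1; smc. Qed.
Lemma SmV_Kb : SmV vKb.
Proof. intros i Hi. destruct i as [|[|[|[|[|i]]]]]; try lia; unfold vKb, kbAb, c0, c1; smc. Qed.
Hint Resolve SmV_K SmV_Kb : smc.

Definition Cx (i : nat) : cfun := fun q => RtoC (getc q i).
Lemma rp_Cx i j q : (i < 5)%nat -> (j < 5)%nat ->
  rpartial j (fun q => getc q i) q = if Nat.eq_dec i j then 1%R else 0%R.
Proof.
  intros Hi Hj. unfold rpartial. destruct (Nat.eq_dec i j) as [->|Hne].
  - rewrite (Derive_ext _ (fun t => t)). apply Derive_id. intros t. apply getc_setc_eq; auto.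
  - rewrite (Derive_ext _ (fun _ => getc q i)). apply Derive_const. intros t. apply getc_setc_neq; auto.
Qed.
Lemma cp_Cx i j q : (i < 5)%nat -> (j < 5)%nat ->
  cpartial j (Cx i) q = RtoC (if Nat.eq_dec i j then 1%R else 0%R).
Proof. intros. unfold Cx. rewrite cp_RtoC. rewrite rp_Cx; auto. Qed.
Lemma cont_coord i p : (i < 5)%nat -> cont_at (fun q => getc q i) p.
Proof. intros Hi eps Heps. exists eps. split; [exact Heps|]. intros q Hq. apply Hq. exact Hi. Qed.
Lemma SmCx i : (i < 5)%nat -> SmC (Cx i).
Proof.
  intros Hi. apply SmC_RtoC. exact HU. intros n. revert i Hi. induction n as [|n IH]; intros i Hi.
  - split; [|exact I]. intros p _. apply cont_coord; auto.
  - split; [|split].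
    + intros p _. apply cont_coord; auto.
    + intros j p Hj _. destruct (Nat.eq_dec i j) as [->|Hne].
      * apply (ex_derive_ext (fun t => t)). intros t. rewrite getc_setc_eq; auto. apply ex_derive_id.
      * apply (ex_derive_ext (fun _ => getc p i)). intros t. rewrite getc_setc_neq; auto. apply ex_derive_const.
    + intros j Hj. eapply Ck_ext. exact HU. 2: apply (Ck_const HU n (if Nat.eq_dec i j then 1%R else 0%R)).
      intros q _. rewrite rp_Cx; auto.
Qed.

Hint Extern 1 (SmC (Cx _)) => (apply SmCx; lia) : smc.
Hint Extern 1 (SmC (fun _ => Cx _ _)) => (apply SmCx; lia) : smc.

Definition Wc (i : nat) : cfun := fun q =>
  match i with 0%nat => Cx 0 q + Ci * Cx 1 q | 1%nat => Cx 2 q + Ci * Cx 3 q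
  | 2%nat => Cx 0 q - Ci * Cx 1 q | 3%nat => Cx 2 q - Ci * Cx 3 q | _ => Cx 4 q end.
Definition lin (a : nat -> C) : cfun := fun q =>
  a 0%nat * Wc 0 q + a 1%nat * Wc 1 q + a 2%nat * Wc 2 q + a 3%nat * Wc 3 q + a 4%nat * Wc 4 q.

Lemma SmWc i : SmC (Wc i).
Proof.
  assert (H : forall k, (k < 5)%nat -> SmC (fun q => Cx k q)) by (intros k Hk; apply SmCx; auto).
  destruct i as [|[|[|[|i]]]]; unfold Wc;
  [apply sPlus | apply sPlus | apply sMinus | apply sMinus | apply H; lia];
  (apply H; lia) || (apply sMult; [apply sConst | apply H; lia]).
Qed.
Hint Resolve SmWc : smc.
Lemma SmLin a : SmC (lin a).
Proof. unfold lin. smc. Qed.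
Hint Resolve SmLin : smc.

Lemma Dc_lin a j q : (j < 5)%nat -> U q -> Dcoord j (lin a) q = a j.
Proof.
  intros Hj Hq. rewrite Dc_repr by auto. unfold lin, Wc.
  repeat ((rewrite cpPlus || rewrite cpMinus || rewrite cpMult || rewrite cp_const); auto; try (apply rA_lt || apply rB_lt); try smc).
  destruct j as [|[|[|[|[|j]]]]]; try lia; simpl; rewrite !cp_Cx by lia; simpl;
  apply injective_projections; simpl; field.
Qed.

Lemma vap_lin X a q : U q -> vap X (lin a) q =
  X 0%nat q * a 0%nat + X 1%nat q * a 1%nat + X 2%nat q * a 2%nat + X 3%nat q * a 3%nat + X 4%nat q * a 4%nat.
Proof. intros Hq. unfold vap. rewrite !Dc_lin by (auto; lia). reflexivity. Qed.

Definition cm (X Y : vf) (g : cfun) : cfun := fun q => vap X (vap Y g) q - vap Y (vap X g) q.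
Definition mu : cfun := vap vLb1 (kkb F).
Definition mb : cfun := vap vL1 (kkb F).
Definition mm : cfun := vap vLb1 (kk F).
Definition aa : cfun := vap vT (Abcoef F 1).
Definition sg : cfun := fun q => kkb F q * aa q + vap vT (Abcoef F 2) q.
Definition alpha : cfun := vap vK (kkb F).
Definition beta : cfun := vap vKb (kk F).

Lemma vap_comb1 W V (c : C) g p : (forall i, (i < 5)%nat -> W i p = c * V i p) -> vap W g p = c * vap V g p.
Proof. intros H. unfold vap. rewrite !H by lia. ring. Qed.
Lemma vap_comb2 W V1 V2 (c1 c2 : C) g p : (forall i, (i < 5)%nat -> W i p = c1 * V1 i p + c2 * V2 i p) ->
  vap W g p = c1 * vap V1 g p + c2 * vap V2 g p.
Proof. intros H. unfold vap. rewrite !H by lia. ring. Qed.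

Lemma dec_K h p : vap vK h p = kk F p * vap vL1 h p + vap vL2 h p.
Proof. unfold vap, vK, vL1, vL2, kA, c0, c1. ring. Qed.
Lemma dec_Kb h p : vap vKb h p = kkb F p * vap vLb1 h p + vap vLb2 h p.
Proof. unfold vap, vKb, vLb1, vLb2, kbAb, c0, c1. ring. Qed.
Lemma I1c p : U p -> vap vLb1 (Abcoef F 2) p = vap vLb2 (Abcoef F 1) p.
Proof.
  intros Hp. change (Abcoef F 2) with (cconj (Acoef F 2)). change (Abcoef F 1) with (cconj (Acoef F 1)).
  rewrite <- conj_L1, <- conj_L2, I1; auto.
Qed.
Lemma vc0 X p : vap X c0 p = 0.
Proof. apply app_const. Qed.
Lemma vc1 X p : vap X c1 p = 0.
Proof. apply app_const. Qed.
Lemma vkA X p : U p -> vap X kA p = vap X (kk F) p * Acoef F 1 p + kk F p * vap X (Acoef F 1) p + vap X (Acoef F 2) p.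
Proof.
  intros Hp. unfold kA. rewrite aPlus; auto; try smc. rewrite aMult; auto; try smc.
Qed.
Lemma vkbAb X p : U p -> vap X kbAb p = vap X (kkb F) p * Abcoef F 1 p + kkb F p * vap X (Abcoef F 1) p + vap X (Abcoef F 2) p.
Proof.
  intros Hp. unfold kbAb. rewrite aPlus; auto; try smc. rewrite aMult; auto; try smc.
Qed.

Lemma eq_mod (a b c z : C) : a - b = c * z -> z = 0 -> a = b.
Proof. intros H Hz. rewrite Hz in H. apply (f_equal (fun t => t + b)) in H. ring_simplify in H. rewrite <- H. ring. Qed.

Ltac brk_comp := intros i Hi; destruct i as [|[|[|[|[|i]]]]]; try lia; unfold brk;
  cbn [vL1 vL2 vLb1 vLb2 vT vK vKb]; rewrite ?vc0, ?vc1, ?vkA, ?vkbAb by auto;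
  rewrite ?dec_K, ?dec_Kb; unfold c0, c1.

Lemma br_T_Kb p : U p -> forall i, (i < 5)%nat -> brk vT vKb i p = vap vT (kkb F) p * vLb1 i p + sg p * vT i p.
Proof. intros Hp. brk_comp; unfold sg, aa; cbn; ring. Qed.

Lemma I1c0 p : U p -> vap vLb1 (Abcoef F 2) p - vap vLb2 (Abcoef F 1) p = 0.
Proof. intros Hp. rewrite I1c; auto. ring. Qed.

Lemma br_L1_Kb p : U p -> forall i, (i < 5)%nat -> brk vL1 vKb i p = mb p * vLb1 i p.
Proof.
  intros Hp. unfold mb. brk_comp; cbn; try ring.
  apply (eq_mod _ _ 1 (kkb F p * lv 1 1 p + lv 1 2 p)); [unfold lv; cbv beta iota; ring | apply P3b; auto].
Qed.
Lemma br_K_Kb p : U p -> forall i, (i < 5)%nat -> brk vK vKb i p = alpha p * vLb1 i p + (- beta p) * vL1 i p.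
Proof.
  intros Hp. unfold alpha, beta. brk_comp; cbn; try ring.
  apply (eq_mod _ _ 1 (kk F p * kkb F p * lv 1 1 p + kk F p * lv 1 2 p + kkb F p * lv 2 1 p + lv 2 2 p));
    [unfold lv; cbv beta iota; ring | apply P4; auto].
Qed.
Lemma br_Lb1_Kb p : U p -> forall i, (i < 5)%nat -> brk vLb1 vKb i p = mu p * vLb1 i p.
Proof.
  intros Hp. unfold mu. brk_comp; cbn; try ring.
  apply (eq_mod _ _ 1 (vap vLb1 (Abcoef F 2) p - vap vLb2 (Abcoef F 1) p)); [ring | apply I1c0; auto].
Qed.
Lemma br_L1_Lb1 p : U p -> forall i, (i < 5)%nat -> brk vL1 vLb1 i p = lv 1 1 p * vT i p.
Proof. intros Hp. brk_comp; cbn; try ring; unfold lv; cbv beta iota; ring. Qed.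
Lemma br_K_Lb1 p : U p -> forall i, (i < 5)%nat -> brk vK vLb1 i p = (- mm p) * vL1 i p.
Proof.
  intros Hp. unfold mm. brk_comp; cbn; try ring.
  apply (eq_mod _ _ 1 (kk F p * lv 1 1 p + lv 2 1 p)); [unfold lv; cbv beta iota; ring | apply P3a; auto].
Qed.
Lemma br_Lb1_T p : U p -> forall i, (i < 5)%nat -> brk vLb1 vT i p = (- aa p) * vT i p.
Proof. intros Hp. unfold aa. brk_comp; cbn; ring. Qed.

Lemma Smmu : SmC mu. Proof. unfold mu. smc. Qed.
Lemma Smmb : SmC mb. Proof. unfold mb. smc. Qed.
Lemma Smmm : SmC mm. Proof. unfold mm. smc. Qed.
Lemma Smaa : SmC aa. Proof. unfold aa. smc. Qed.
Lemma Smsg : SmC sg. Proof. unfold sg. smc. Qed.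
Lemma Smalpha : SmC alpha. Proof. unfold alpha. smc. Qed.
Lemma Smbeta : SmC beta. Proof. unfold beta. smc. Qed.
Hint Resolve Smmu Smmb Smmm Smaa Smsg Smalpha Smbeta : smc.
Lemma Smcm X Y g : SmV X -> SmV Y -> SmC g -> SmC (cm X Y g).
Proof. intros. unfold cm. smc. Qed.
Hint Resolve Smcm : smc.

Lemma cm_anti X Y g q : cm X Y g q = - cm Y X g q.
Proof. unfold cm. ring. Qed.

Lemma C_TKb g q : U q -> SmC g -> cm vT vKb g q = vap vT (kkb F) q * vap vLb1 g q + sg q * vap vT g q.
Proof. intros. unfold cm. rewrite aComm; auto; try smc. apply vap_comb2. apply br_T_Kb; auto. Qed.
Lemma C_L1Kb g q : U q -> SmC g -> cm vL1 vKb g q = mb q * vap vLb1 g q.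
Proof. intros. unfold cm. rewrite aComm; auto; try smc. apply vap_comb1. apply br_L1_Kb; auto. Qed.
Lemma C_KKb g q : U q -> SmC g -> cm vK vKb g q = alpha q * vap vLb1 g q - beta q * vap vL1 g q.
Proof.
  intros. unfold cm. rewrite aComm; auto; try smc. rewrite (vap_comb2 (brk vK vKb) vLb1 vL1 (alpha q) (- beta q) g q).
  ring. apply br_K_Kb; auto.
Qed.
Lemma C_Lb1Kb g q : U q -> SmC g -> cm vLb1 vKb g q = mu q * vap vLb1 g q.
Proof. intros. unfold cm. rewrite aComm; auto; try smc. apply vap_comb1. apply br_Lb1_Kb; auto. Qed.
Lemma C_L1Lb1 g q : U q -> SmC g -> cm vL1 vLb1 g q = lv 1 1 q * vap vT g q.
Proof. intros. unfold cm. rewrite aComm; auto; try smc. apply vap_comb1. apply br_L1_Lb1; auto. Qed.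
Lemma C_KLb1 g q : U q -> SmC g -> cm vK vLb1 g q = - mm q * vap vL1 g q.
Proof. intros. unfold cm. rewrite aComm; auto; try smc. apply vap_comb1. apply br_K_Lb1; auto. Qed.
Lemma C_Lb1T g q : U q -> SmC g -> cm vLb1 vT g q = - aa q * vap vT g q.
Proof. intros. unfold cm. rewrite aComm; auto; try smc. apply vap_comb1. apply br_Lb1_T; auto. Qed.

Lemma jacobi X Y Z g p : U p -> SmV X -> SmV Y -> SmV Z -> SmC g ->
  vap X (cm Y Z g) p - cm Y Z (vap X g) p + (vap Y (cm Z X g) p - cm Z X (vap Y g) p)
  + (vap Z (cm X Y g) p - cm X Y (vap Z g) p) = 0.
Proof.
  intros. unfold cm at 1 3 5. rewrite !aMinus; auto; try smc. unfold cm. ring.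
Qed.

Lemma vap_cW X (c : cfun) W g h p : U p -> SmV W -> SmC c -> SmC g ->
  (forall q, U q -> h q = c q * vap W g q) ->
  vap X h p = vap X c p * vap W g p + c p * vap X (vap W g) p.
Proof.
  intros Hp HW Hc Hg Hh. rewrite (aExt X h (fun q => c q * vap W g q)); auto.
  rewrite aMult; auto; smc.
Qed.

Definition gp (p0 : pt) : cfun := lin (fun i => match i with 0%nat => - Acoef F 1 p0
  | 2%nat => - Abcoef F 1 p0 | 4%nat => 1 | _ => 0 end).
Lemma Smgp p0 : SmC (gp p0).
Proof. unfold gp. apply SmLin. Qed.
Hint Resolve Smgp : smc.
Lemma gp_L1 p : U p -> vap vL1 (gp p) p = 0.
Proof. intros Hp. unfold gp. rewrite vap_lin by auto. unfold vL1, c0, c1. ring. Qed.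
Lemma gp_Lb1 p : U p -> vap vLb1 (gp p) p = 0.
Proof. intros Hp. unfold gp. rewrite vap_lin by auto. unfold vLb1, c0, c1. ring. Qed.
Lemma gp_T p : U p -> vap vT (gp p) p = 1.
Proof. intros Hp. unfold gp. rewrite vap_lin by auto. unfold vT, c0, c1. ring. Qed.

Lemma beta0 p : U p -> beta p = 0.
Proof.
  intros Hp. set (g := gp p).
  assert (Hg : SmC g) by (unfold g; smc).
  generalize (jacobi vK vKb vLb1 g p Hp SmV_K SmV_Kb SmV_Lb1 Hg). intros J.
  rewrite (vap_cW vK (fun q => - mu q) vLb1 g (cm vKb vLb1 g)) in J; auto; try smc;
    [| intros q Hq; rewrite cm_anti, C_Lb1Kb; auto; ring].
  rewrite (cm_anti vKb vLb1 (vap vK g)), C_Lb1Kb in J; auto; try smc.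
  rewrite (vap_cW vKb mm vL1 g (cm vLb1 vK g)) in J; auto; try smc;
    [| intros q Hq; rewrite cm_anti, C_KLb1; auto; ring].
  rewrite (cm_anti vLb1 vK (vap vKb g)), C_KLb1 in J; auto; try smc.
  rewrite (aExt vLb1 (cm vK vKb g) (fun q => alpha q * vap vLb1 g q - beta q * vap vL1 g q)) in J; auto;
    [| intros q Hq; apply C_KKb; auto].
  rewrite aMinus, !aMult in J; auto; try smc.
  rewrite C_KKb in J; auto; try smc.
  assert (E1 : vap vK (vap vLb1 g) p = vap vLb1 (vap vK g) p + cm vK vLb1 g p) by (unfold cm; ring).
  assert (E2 : vap vKb (vap vL1 g) p = vap vL1 (vap vKb g) p - cm vL1 vKb g p) by (unfold cm; ring).
  assert (E3 : vap vL1 (vap vLb1 g) p = vap vLb1 (vap vL1 g) p + cm vL1 vLb1 g p) by (unfold cm; ring).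
  rewrite E1, E2, E3 in J. rewrite C_KLb1, C_L1Kb, C_L1Lb1 in J; auto.
  unfold g in J. rewrite ?gp_L1, ?gp_Lb1, ?gp_T in J; auto.
  assert (H0 : beta p * lv 1 1 p = 0) by (rewrite <- J; ring).
  generalize (lv11_nz p Hp). intros Hn.
  transitivity (beta p * lv 1 1 p / lv 1 1 p). field. auto. rewrite H0. field. auto.
Qed.

Lemma from0 (Z X Y : C) : Z = 0 -> X - Z = Y -> X = Y.
Proof. intros Hz H. rewrite Hz in H. rewrite <- H. ring. Qed.

Lemma from0' (Z X Y : C) : Z = 0 -> X + Z = Y -> X = Y.
Proof. intros Hz H. rewrite Hz in H. rewrite <- H. ring. Qed.

Lemma KbL11 p : U p -> vap vKb (lv 1 1) p = (sg p - mu p) * lv 1 1 p.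
Proof.
  intros Hp. set (g := gp p).
  assert (Hg : SmC g) by (unfold g; smc).
  generalize (jacobi vKb vL1 vLb1 g p Hp SmV_Kb SmV_L1 SmV_Lb1 Hg). intros J.
  rewrite (vap_cW vKb (lv 1 1) vT g (cm vL1 vLb1 g)) in J; auto; try smc;
    [| intros q Hq; rewrite C_L1Lb1; auto].
  rewrite (C_L1Lb1 (vap vKb g)) in J; auto; try smc.
  rewrite (vap_cW vL1 mu vLb1 g (cm vLb1 vKb g)) in J; auto; try smc;
    [| intros q Hq; rewrite C_Lb1Kb; auto].
  rewrite (C_Lb1Kb (vap vL1 g)) in J; auto; try smc.
  rewrite (vap_cW vLb1 (fun q => - mb q) vLb1 g (cm vKb vL1 g)) in J; auto; try smc;
    [| intros q Hq; rewrite cm_anti, C_L1Kb; auto; ring].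
  rewrite (cm_anti vKb vL1 (vap vLb1 g)), C_L1Kb in J; auto; try smc.
  assert (E1 : vap vKb (vap vT g) p = vap vT (vap vKb g) p - cm vT vKb g p) by (unfold cm; ring).
  assert (E3 : vap vL1 (vap vLb1 g) p = vap vLb1 (vap vL1 g) p + cm vL1 vLb1 g p) by (unfold cm; ring).
  rewrite E1, E3 in J. rewrite C_TKb, C_L1Lb1 in J; auto.
  unfold g in J. rewrite ?gp_L1, ?gp_Lb1, ?gp_T in J; auto.
  apply (from0 _ _ _ J). ring.
Qed.

Lemma Kbaa p : U p -> vap vKb aa p = vap vLb1 sg p - mu p * aa p.
Proof.
  intros Hp. set (g := gp p).
  assert (Hg : SmC g) by (unfold g; smc).
  generalize (jacobi vKb vLb1 vT g p Hp SmV_Kb SmV_Lb1 SmV_T Hg). intros J.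
  rewrite (vap_cW vKb (fun q => - aa q) vT g (cm vLb1 vT g)) in J; auto; try smc;
    [| intros q Hq; rewrite C_Lb1T; auto].
  rewrite (C_Lb1T (vap vKb g)) in J; auto; try smc.
  rewrite (aExt vLb1 (cm vT vKb g) (fun q => vap vT (kkb F) q * vap vLb1 g q + sg q * vap vT g q)) in J; auto;
    [| intros q Hq; apply C_TKb; auto].
  rewrite aPlus, !aMult in J; auto; try smc.
  rewrite (C_TKb (vap vLb1 g)) in J; auto; try smc.
  rewrite (vap_cW vT (fun q => - mu q) vLb1 g (cm vKb vLb1 g)) in J; auto; try smc;
    [| intros q Hq; rewrite cm_anti, C_Lb1Kb; auto; ring].
  rewrite (cm_anti vKb vLb1 (vap vT g)), C_Lb1Kb in J; auto; try smc.
  rewrite !aOpp in J; auto; try smc.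
  assert (E1 : vap vKb (vap vT g) p = vap vT (vap vKb g) p - cm vT vKb g p) by (unfold cm; ring).
  assert (E2 : vap vLb1 (vap vT g) p = vap vT (vap vLb1 g) p + cm vLb1 vT g p) by (unfold cm; ring).
  rewrite E1, E2 in J. rewrite C_TKb, C_Lb1T in J; auto.
  unfold g in J. rewrite ?gp_L1, ?gp_Lb1, ?gp_T in J; auto.
  apply (from0' _ _ _ J). ring.
Qed.

Lemma KbLb1 g p : U p -> SmC g -> vap vKb (vap vLb1 g) p = vap vLb1 (vap vKb g) p - mu p * vap vLb1 g p.
Proof.
  intros Hp Hg. rewrite <- C_Lb1Kb; auto. unfold cm. ring.
Qed.

Lemma Kbmm p : U p -> vap vKb mm p = - mu p * mm p.
Proof.
  intros Hp. unfold mm at 1. rewrite KbLb1; auto; try smc.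
  rewrite (aExt vLb1 (vap vKb (kk F)) (fun _ => 0)); auto.
  rewrite app_const. unfold mm. ring.
  intros q Hq. apply beta0; auto.
Qed.

Lemma ell_fun : ell F = fun q => Ci * lv 1 1 q.
Proof. apply functional_extensionality. apply ell_lv. Qed.
Lemma Smell : SmC (ell F).
Proof. rewrite ell_fun. smc. Qed.
Hint Resolve Smell : smc.

Lemma Kbell p : U p -> vap vKb (ell F) p = (sg p - mu p) * ell F p.
Proof.
  intros Hp. rewrite ell_fun. rewrite (aMult vKb (fun _ => Ci) (lv 1 1)); auto; try smc.
  rewrite app_const, KbL11; auto. ring.
Qed.

Lemma conj_T g q : Cconj (vap vT g q) = vap vT (cconj g) q.
Proof.
  unfold vap, vT, c0, c1. rewrite !Cplus_conj, !Cmult_conj. rewrite !Dc_conj by lia. simpl.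
  replace (Cconj 0) with (RtoC 0) by (apply injective_projections; simpl; ring).
  replace (Cconj 1) with (RtoC 1) by (apply injective_projections; simpl; ring). ring.
Qed.

Lemma Pbf_eq q : U q -> Pbf F q = (vap vLb1 (ell F) q - ell F q * aa q) / ell F q.
Proof.
  intros Hq. unfold Pbf, cconj, Pf.
  replace (Dz 1 (ell F) q + Acoef F 1 q * Dv (ell F) q - ell F q * Dv (Acoef F 1) q)
    with (vap vL1 (ell F) q - ell F q * vap vT (Acoef F 1) q)
    by (unfold vap, vL1, vT, c0, c1; simpl; ring).
  rewrite Cdiv_conj by auto. rewrite Cminus_conj, Cmult_conj, conj_L1, conj_T, cconj_ell, ell_conj.
  reflexivity.
Qed.

Lemma SmPbf : SmC (Pbf F).
Proof.
  apply (SmC_ext HU (fun q => (vap vLb1 (ell F) q - ell F q * aa q) / ell F q)).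
  intros q Hq. symmetry. apply Pbf_eq; auto.
  apply sDiv; [apply sMinus; [apply sApp; [exact SmV_Lb1 | exact Smell] | apply sMult; [exact Smell | exact Smaa]]
    | exact Smell | exact Hell].
Qed.
Hint Resolve SmPbf : smc.

Lemma SmPdiv : SmC (fun q => vap vLb1 (ell F) q / ell F q).
Proof. apply sDiv; [apply sApp; [exact SmV_Lb1 | exact Smell] | exact Smell | exact Hell]. Qed.
Hint Resolve SmPdiv : smc.

Lemma KbPb p : U p -> vap vKb (Pbf F) p = - vap vLb1 mu p - mu p * Pbf F p.
Proof.
  intros Hp.
  rewrite (aExt vKb (Pbf F) (fun q => vap vLb1 (ell F) q / ell F q - aa q)); auto;
    [| intros q Hq; rewrite Pbf_eq; auto; field; auto].
  rewrite aMinus; auto; try exact SmPdiv; try exact Smaa.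
  rewrite aDiv; auto; try (apply sApp; [exact SmV_Lb1 | exact Smell]); try exact Smell.
  rewrite KbLb1; auto; try exact Smell. rewrite Kbaa; auto. rewrite Kbell; auto.
  rewrite (aExt vLb1 (vap vKb (ell F)) (fun q => sg q * ell F q - mu q * ell F q)); auto;
    [| intros q Hq; rewrite Kbell; auto; ring].
  rewrite aMinus, !aMult; auto; try smc.
  rewrite Pbf_eq; auto.
  generalize (Hell p Hp). intros Hn.
  field. auto.
Qed.


Lemma Lb1k_mm : Lb1k F = mm.
Proof. unfold Lb1k, mm. rewrite Lbop1_app. reflexivity. Qed.

Lemma mm_nz q : U q -> mm q <> 0.
Proof. intros Hq. rewrite <- Lb1k_mm. apply Hm; auto. Qed.

Definition rr : cfun := fun q => / mm q.
Lemma Smrr : SmC rr.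
Proof. unfold rr. apply sInv. exact Smmm. exact mm_nz. Qed.
Hint Resolve Smrr : smc.

Definition Dm : cfun := vap vLb1 mm.
Definition DDm : cfun := vap vLb1 Dm.
Definition DP : cfun := vap vLb1 (Pbf F).
Lemma SmDm : SmC Dm. Proof. unfold Dm. smc. Qed.
Lemma SmDDm : SmC DDm. Proof. unfold DDm. apply sApp. exact SmV_Lb1. exact SmDm. Qed.
Lemma SmDP : SmC DP. Proof. unfold DP. smc. Qed.
Hint Resolve SmDm SmDDm SmDP : smc.

Lemma H0_eq q : U q -> H0 F q =
  - (1/6) * (DDm q * rr q) + (2/9) * (Dm q * Dm q * (rr q * rr q))
  + (1/18) * (Dm q * Pbf F q * rr q) + (1/6) * DP q - (1/9) * (Pbf F q * Pbf F q).
Proof.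
  intros Hq. unfold H0, DDm, Dm, DP, rr. rewrite !Lbop1_app. rewrite Lb1k_mm.
  generalize (mm_nz q Hq). intros Hn. simpl. field. auto.
Qed.

Lemma Kbrr p : U p -> vap vKb rr p = mu p * rr p.
Proof.
  intros Hp. unfold rr. rewrite aInv; auto; try exact Smmm; try exact mm_nz.
  rewrite Kbmm; auto. generalize (mm_nz p Hp). intros Hn. field. auto.
Qed.

Lemma KbDm q : U q -> vap vKb Dm q = - (vap vLb1 mu q * mm q) - mu q * Dm q - mu q * Dm q.
Proof.
  intros Hq. unfold Dm. rewrite KbLb1; auto; try exact Smmm.
  rewrite (aExt vLb1 (vap vKb mm) (fun q => - mu q * mm q)); auto;
    [| intros q' Hq'; apply Kbmm; auto].
  rewrite aMult; auto; try smc. rewrite aOpp; auto; try smc. ring.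
Qed.

Lemma KbDDm p : U p -> vap vKb DDm p =
  - (vap vLb1 (vap vLb1 mu) p * mm p + vap vLb1 mu p * Dm p)
  - (vap vLb1 mu p * Dm p + mu p * DDm p) - (vap vLb1 mu p * Dm p + mu p * DDm p) - mu p * DDm p.
Proof.
  intros Hp. unfold DDm at 1. rewrite KbLb1; auto; try exact SmDm.
  rewrite (aExt vLb1 (vap vKb Dm) (fun q => - (vap vLb1 mu q * mm q) - mu q * Dm q - mu q * Dm q)); auto;
    [| intros q' Hq'; apply KbDm; auto].
  rewrite !aMinus; auto; try smc.
  rewrite aOpp; auto; try smc. rewrite !aMult; auto; try smc.
Qed.

Lemma KbDP p : U p -> vap vKb DP p = - vap vLb1 (vap vLb1 mu) p - (vap vLb1 mu p * Pbf F p + mu p * DP p) - mu p * DP p.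
Proof.
  intros Hp. unfold DP at 1. rewrite KbLb1; auto; try exact SmPbf.
  rewrite (aExt vLb1 (vap vKb (Pbf F)) (fun q => - vap vLb1 mu q - mu q * Pbf F q)); auto;
    [| intros q' Hq'; apply KbPb; auto].
  rewrite aMinus; auto; try smc. rewrite aOpp; auto; try smc. rewrite aMult; auto; try smc.
Qed.

Lemma KbH0 p : U p -> vap vKb (H0 F) p = - mu p * H0 F p - mu p * H0 F p.
Proof.
  intros Hp.
  rewrite (aExt vKb (H0 F) (fun q => - (1/6) * (DDm q * rr q) + (2/9) * (Dm q * Dm q * (rr q * rr q))
    + (1/18) * (Dm q * Pbf F q * rr q) + (1/6) * DP q - (1/9) * (Pbf F q * Pbf F q))); auto;
    [| intros q Hq; apply H0_eq; auto].
  rewrite H0_eq; auto.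
  repeat (first [rewrite aMinus | rewrite aPlus | rewrite aMult | rewrite aOpp]; auto; try smc).
  rewrite !app_const.
  rewrite Kbrr, KbDm, KbDDm, KbDP, KbPb; auto.
  unfold rr. generalize (mm_nz p Hp). intros Hn. field. auto.
Qed.

Lemma Cinv_conj' (z : C) : Cconj (/ z) = / Cconj z.
Proof.
  destruct z as [a b]. unfold Cinv, Cconj. cbn [fst snd].
  assert (D : ((a ^ 2 + (- b) ^ 2) = a ^ 2 + b ^ 2)%R) by ring.
  rewrite D. f_equal. unfold Rdiv. ring.
Qed.
Lemma Cdiv_conj' (a b : C) : Cconj (a / b) = Cconj a / Cconj b.
Proof. unfold Cdiv. rewrite Cmult_conj, Cinv_conj'. reflexivity. Qed.
Lemma conjA j q : Cconj (Acoef F j q) = Abcoef F j q.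
Proof. reflexivity. Qed.
Lemma conjAb j q : Cconj (Abcoef F j q) = Acoef F j q.
Proof. apply Cconj_conj. Qed.
Lemma conjkk q : Cconj (kk F q) = kkb F q.
Proof. reflexivity. Qed.
Lemma conjkkb q : Cconj (kkb F q) = kk F q.
Proof. apply Cconj_conj. Qed.
Lemma conjmm q : Cconj (mm q) = mb q.
Proof. unfold mm, mb. rewrite conj_Lb1. reflexivity. Qed.
Lemma conjR (r : R) : Cconj (RtoC r) = RtoC r.
Proof. apply injective_projections; simpl; ring. Qed.
Lemma mb_nz q : U q -> mb q <> 0.
Proof. intros Hq E. apply (mm_nz q Hq). rewrite <- (Cconj_conj (mm q)), conjmm, E. apply injective_projections; simpl; ring. Qed.
Lemma R3_nz : RtoC 3 <> 0.
Proof. intros E. apply (f_equal fst) in E. simpl in E. lra. Qed.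

Lemma SmH0 : SmC (H0 F).
Proof.
  apply (SmC_ext HU (fun q => - (1/6) * (DDm q * rr q) + (2/9) * (Dm q * Dm q * (rr q * rr q))
    + (1/18) * (Dm q * Pbf F q * rr q) + (1/6) * DP q - (1/9) * (Pbf F q * Pbf F q))).
  intros q Hq. symmetry. apply H0_eq; auto.
  smc.
Qed.
Lemma SmB0 : SmC (B0 F).
Proof.
  apply (SmC_ext HU (fun q => Dm q * rr q - Pbf F q)).
  intros q Hq. unfold B0, Dm, rr. rewrite Lbop1_app, Lb1k_mm. reflexivity.
  smc.
Qed.
Hint Resolve SmH0 SmB0 : smc.

Definition fT : cfun := ell F.
Definition fL1 : cfun := fun q => - (Ci / 3 * B0 F q).
Definition fK : cfun := fun q => - (Ci * H0 F q / mm q).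
Definition fLb1 : cfun := fun q => Ci / 3 * Cconj (B0 F q).
Definition fKb : cfun := fun q => Ci * Cconj (H0 F q) / mb q.
Definition E0 : vf := fun i q => fT q * vT i q + fL1 q * vL1 i q + fK q * vK i q + fLb1 q * vLb1 i q + fKb q * vKb i q.
Definition rb : cfun := fun q => / mb q.
Definition E4 : vf := fun i q => rb q * vKb i q.

Lemma SmfK : SmC fK.
Proof.
  apply (SmC_ext HU (fun q => - (Ci * (H0 F q * rr q)))).
  intros q Hq. unfold fK, rr. field. apply mm_nz; auto. smc.
Qed.
Lemma Smrb : SmC rb.
Proof. unfold rb. apply sInv. exact Smmb. exact mb_nz. Qed.
Lemma SmfKb : SmC fKb.
Proof.
  apply (SmC_ext HU (fun q => Ci * cconj (H0 F) q * rb q)).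
  intros q Hq. unfold fKb, rb, cconj. field. apply mb_nz; auto. smc. apply Smrb.
Qed.
Lemma SmfL1 : SmC fL1. Proof. unfold fL1. smc. Qed.
Lemma SmfLb1 : SmC fLb1.
Proof. apply (SmC_ext HU (fun q => Ci / 3 * cconj (B0 F) q)). intros; reflexivity. smc. Qed.
Hint Resolve SmfK Smrb SmfKb SmfL1 SmfLb1 : smc.
Lemma SmV_E0 : SmV E0.
Proof. intros i Hi. unfold E0, fT. smc; (apply SmV_T || apply SmV_L1 || apply SmV_K || apply SmV_Lb1 || apply SmV_Kb); auto. Qed.
Lemma SmV_E4 : SmV E4.
Proof. intros i Hi. unfold E4. smc; apply SmV_Kb; auto. Qed.
Hint Resolve SmV_E0 SmV_E4 : smc.

Ltac dual_tac := intros q Hq;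
  unfold coframe, conj_form, kappa0', zeta0'', rho0, E0, E4, vT, vL1, vK, vLb1, vKb, kA, kbAb, c0, c1,
    fT, fL1, fK, fLb1, fKb, rb, cconj; cbv beta iota;
  rewrite ?Lb1k_mm;
  repeat (rewrite ?Cplus_conj, ?Cminus_conj, ?Cmult_conj, ?Copp_conj, ?Cdiv_conj', ?Cinv_conj',
    ?conjA, ?conjAb, ?conjkk, ?conjkkb, ?conjmm, ?conjR, ?ell_conj, ?Ci_conj);
  generalize (Hell q Hq) (mm_nz q Hq) (mb_nz q Hq) R3_nz; intros;
  field; auto.

Lemma dX0 : forall q, U q -> coframe F 0%nat 0%nat q * E0 0%nat q + coframe F 0%nat 1%nat q * E0 1%nat q + coframe F 0%nat 2%nat q * E0 2%nat q + coframe F 0%nat 3%nat q * E0 3%nat q + coframe F 0%nat 4%nat q * E0 4%nat q = 1.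
Proof. dual_tac. Qed.
Lemma dY0 : forall q, U q -> coframe F 0%nat 0%nat q * E4 0%nat q + coframe F 0%nat 1%nat q * E4 1%nat q + coframe F 0%nat 2%nat q * E4 2%nat q + coframe F 0%nat 3%nat q * E4 3%nat q + coframe F 0%nat 4%nat q * E4 4%nat q = 0.
Proof. dual_tac. Qed.
Lemma dX1 : forall q, U q -> coframe F 1%nat 0%nat q * E0 0%nat q + coframe F 1%nat 1%nat q * E0 1%nat q + coframe F 1%nat 2%nat q * E0 2%nat q + coframe F 1%nat 3%nat q * E0 3%nat q + coframe F 1%nat 4%nat q * E0 4%nat q = 0.
Proof. dual_tac. Qed.
Lemma dY1 : forall q, U q -> coframe F 1%nat 0%nat q * E4 0%nat q + coframe F 1%nat 1%nat q * E4 1%nat q + coframe F 1%nat 2%nat q * E4 2%nat q + coframe F 1%nat 3%nat q * E4 3%nat q + coframe F 1%nat 4%nat q * E4 4%nat q = 0.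
Proof. dual_tac. Qed.
Lemma dX2 : forall q, U q -> coframe F 2%nat 0%nat q * E0 0%nat q + coframe F 2%nat 1%nat q * E0 1%nat q + coframe F 2%nat 2%nat q * E0 2%nat q + coframe F 2%nat 3%nat q * E0 3%nat q + coframe F 2%nat 4%nat q * E0 4%nat q = 0.
Proof. dual_tac. Qed.
Lemma dY2 : forall q, U q -> coframe F 2%nat 0%nat q * E4 0%nat q + coframe F 2%nat 1%nat q * E4 1%nat q + coframe F 2%nat 2%nat q * E4 2%nat q + coframe F 2%nat 3%nat q * E4 3%nat q + coframe F 2%nat 4%nat q * E4 4%nat q = 0.
Proof. dual_tac. Qed.
Lemma dX3 : forall q, U q -> coframe F 3%nat 0%nat q * E0 0%nat q + coframe F 3%nat 1%nat q * E0 1%nat q + coframe F 3%nat 2%nat q * E0 2%nat q + coframe F 3%nat 3%nat q * E0 3%nat q + coframe F 3%nat 4%nat q * E0 4%nat q = 0.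
Proof. dual_tac. Qed.
Lemma dY3 : forall q, U q -> coframe F 3%nat 0%nat q * E4 0%nat q + coframe F 3%nat 1%nat q * E4 1%nat q + coframe F 3%nat 2%nat q * E4 2%nat q + coframe F 3%nat 3%nat q * E4 3%nat q + coframe F 3%nat 4%nat q * E4 4%nat q = 0.
Proof. dual_tac. Qed.
Lemma dX4 : forall q, U q -> coframe F 4%nat 0%nat q * E0 0%nat q + coframe F 4%nat 1%nat q * E0 1%nat q + coframe F 4%nat 2%nat q * E0 2%nat q + coframe F 4%nat 3%nat q * E0 3%nat q + coframe F 4%nat 4%nat q * E0 4%nat q = 0.
Proof. dual_tac. Qed.
Lemma dY4 : forall q, U q -> coframe F 4%nat 0%nat q * E4 0%nat q + coframe F 4%nat 1%nat q * E4 1%nat q + coframe F 4%nat 2%nat q * E4 2%nat q + coframe F 4%nat 3%nat q * E4 3%nat q + coframe F 4%nat 4%nat q * E4 4%nat q = 1.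
Proof. dual_tac. Qed.


Lemma Smrho j : SmC (rho0 F j).
Proof.
  assert (Hd : forall f, SmC f -> SmC (fun p => f p / ell F p)) by (intros f Hf; apply sDiv; [exact Hf | exact Smell | exact Hell]).
  destruct j as [|[|[|[|j]]]]; unfold rho0.
  - apply (Hd (fun p => - Acoef F 1 p)). smc.
  - apply (Hd (fun p => - Acoef F 2 p)). smc.
  - apply (Hd (fun p => - Abcoef F 1 p)). smc.
  - apply (Hd (fun p => - Abcoef F 2 p)). smc.
  - apply (Hd (fun p => 1)). smc.
Qed.
Hint Resolve Smrho : smc.
Lemma SmZ j : SmC (zeta0'' F j).
Proof.
  unfold zeta0''. destruct j as [|[|j]].
  - apply sPlus. apply sConst. smc.
  - apply sPlus. rewrite Lb1k_mm. exact Smmm. smc.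
  - apply sPlus. apply sConst. smc.
Qed.
Hint Resolve SmZ : smc.

Lemma vapE4 h q : vap E4 h q = rb q * vap vKb h q.
Proof. unfold vap, E4. ring. Qed.
Lemma vapE0 h q : vap E0 h q = fT q * vap vT h q + fL1 q * vap vL1 h q + fK q * vap vK h q
  + fLb1 q * vap vLb1 h q + fKb q * vap vKb h q.
Proof. unfold vap, E0. ring. Qed.

Lemma KbfK p : U p -> vap vKb fK p = Ci * mu p * H0 F p * rr p.
Proof.
  intros Hp. rewrite (aExt vKb fK (fun q => - Ci * (H0 F q * rr q))); auto;
    [| intros q Hq; unfold fK, rr; field; apply mm_nz; auto].
  rewrite aMult; auto; try smc. rewrite aMult; auto; try smc.
  rewrite app_const, KbH0, Kbrr; auto. ring.
Qed.

Lemma cm_self X g q : cm X X g q = 0.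
Proof. unfold cm. ring. Qed.

Lemma comm_zero p : U p ->
  vap E0 (vap E4 (lin (fun j => zeta0'' F j p))) p - vap E4 (vap E0 (lin (fun j => zeta0'' F j p))) p = 0.
Proof.
  intros Hp. set (G := lin (fun j => zeta0'' F j p)).
  assert (HG : SmC G) by (unfold G; smc).
  assert (GT : vap vT G p = Ci * H0 F p * (1 / ell F p)).
  { unfold G. rewrite vap_lin by auto. unfold vT, zeta0'', rho0, c0, c1. ring. }
  assert (GL1 : vap vL1 G p = 0).
  { unfold G. rewrite vap_lin by auto. unfold vL1, zeta0'', rho0, c0, c1.
    generalize (Hell p Hp). intros. field. auto. }
  assert (GLb1 : vap vLb1 G p = 0).
  { unfold G. rewrite vap_lin by auto. unfold vLb1, zeta0'', rho0, c0, c1.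
    generalize (Hell p Hp). intros. field. auto. }
  assert (GKb : vap vKb G p = 0).
  { unfold G. rewrite vap_lin by auto. unfold vKb, kbAb, zeta0'', rho0, c0, c1.
    generalize (Hell p Hp). intros. field. auto. }
  assert (GK : vap vK G p = mm p).
  { unfold G. rewrite vap_lin by auto. unfold vK, kA, zeta0'', rho0, c0, c1. rewrite Lb1k_mm.
    generalize (Hell p Hp). intros. field. auto. }
  rewrite (aExt E0 (vap E4 G) (fun q => rb q * vap vKb G q)); auto;
    [| intros q Hq; apply vapE4].
  rewrite aMult; auto; try smc. rewrite GKb.
  rewrite (vapE0 (vap vKb G)). rewrite vapE4.
  rewrite (aExt vKb (vap E0 G) (fun q => fT q * vap vT G q + fL1 q * vap vL1 G q + fK q * vap vK G q
    + fLb1 q * vap vLb1 G q + fKb q * vap vKb G q)); auto; [| intros q Hq; apply vapE0].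
  repeat (first [rewrite aPlus | rewrite aMult]; auto; try smc).
  assert (E1 : forall V, vap V (vap vKb G) p = vap vKb (vap V G) p + cm V vKb G p) by (intros; unfold cm; ring).
  rewrite (E1 vT), (E1 vL1), (E1 vK), (E1 vLb1).
  rewrite C_TKb, C_L1Kb, C_KKb, C_Lb1Kb; auto.
  rewrite GT, GL1, GLb1, GKb, GK.
  unfold fT. rewrite Kbell, KbfK; auto.
  unfold rr, fK. generalize (Hell p Hp) (mm_nz p Hp). intros. field. auto.
Qed.

Lemma c04_zero (c : nat -> nat -> cfun) p : U p ->
  (forall i j, (i < 5)%nat -> (j < 5)%nat -> dform (zeta0'' F) i j p = expand2 (coframe F) c i j p) ->
  c 0%nat 4%nat p = 0.
Proof.
  intros Hp Hc.
  rewrite <- (alg_c04 (coframe F) c (fun i => E0 i p) (fun j => E4 j p) p);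
    [| apply dX0 | apply dY0 | apply dX1 | apply dY1 | apply dX2 | apply dY2 | apply dX3 | apply dY3 | apply dX4 | apply dY4]; auto.
  rewrite <- !Hc by lia.
  assert (HZ4 : vap E0 (fun q => zeta0'' F 0%nat q * E4 0%nat q + zeta0'' F 1%nat q * E4 1%nat q + zeta0'' F 2%nat q * E4 2%nat q + zeta0'' F 3%nat q * E4 3%nat q + zeta0'' F 4%nat q * E4 4%nat q) p = 0).
  { rewrite (aExt E0 _ (fun _ => 0)); auto. apply app_const. intros q Hq. apply dY2; auto. }
  assert (HZ0 : vap E4 (fun q => zeta0'' F 0%nat q * E0 0%nat q + zeta0'' F 1%nat q * E0 1%nat q + zeta0'' F 2%nat q * E0 2%nat q + zeta0'' F 3%nat q * E0 3%nat q + zeta0'' F 4%nat q * E0 4%nat q) p = 0).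
  { rewrite (aExt E4 _ (fun _ => 0)); auto. apply app_const. intros q Hq. apply dX2; auto. }
  repeat (first [rewrite aPlus in HZ4 | rewrite aMult in HZ4]; auto; try smc).
  repeat (first [rewrite aPlus in HZ0 | rewrite aMult in HZ0]; auto; try smc).
  generalize (comm_zero p Hp). intros HC.
  rewrite aComm in HC; auto; try smc.
  rewrite vap_lin in HC; auto.
  unfold brk in HC.
  apply (from0' _ _ _ HC).
  apply (from0 _ _ _ HZ4). apply (from0' _ _ _ HZ0).
  unfold dform, vap. ring.
Qed.
End Main.

Theorem lemma9p1 (U : pt -> Prop) (F : pt -> R) :
  open_pt U ->
  analytic_on U F ->
  smooth_on U F ->
  (forall p, U p -> ell F p <> 0%C) ->
  (forall p, U p -> levi_rank_one F p) ->
  (forall p, U p -> Lb1k F p <> 0%C) ->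
  forall c : nat -> nat -> cfun,
    (forall p, U p -> forall i j, (i < 5)%nat -> (j < 5)%nat ->
       dform (zeta0'' F) i j p = expand2 (coframe F) c i j p) ->
    forall p, U p -> c 0%nat 4%nat p = 0%C.
Proof.
  intros HU Han HF Hell Hrk Hm c Hc p Hp.
  apply (c04_zero HU F HF Hell Hrk Hm c p Hp). intros i j Hi Hj. apply Hc; auto.
Qed.
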